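(* Let $X$ and $\mu=\mu_{(p,q,\mathcal N)}$ be as in the context, under the standing assumptions. Then: (1) For every $x\in X=\operatorname{supp}(\mu)$, $$-\frac{\log(1-p)}{\log A}\le \underline{\dim}_{\rm loc}(\mu,x)\le -\frac{\log p}{\log A}\quad\text{and}\quad -\frac{\log(1-q)}{\log B}\le \overline{\dim}_{\rm loc}(\mu,x)\le -\frac{\log q}{\log B}.$$ (2) $\underline{\dim}_{\rm loc}(\mu,x)<\overline{\dim}_{\rm loc}(\mu,x)$ for every $x\in X$; in particular the local dimension of $\mu$ exists at no point of its support. (3) For $\mu$-almost every $x\in X$, $$\underline{\dim}_{\rm loc}(\mu,x)=\frac{H(p)}{\log A},\qquad \overline{\dim}_{\rm loc}(\mu,x)=\frac{H(q)}{\log B},$$ where $H(p)=-p\log p-(1-p)\log(1-p)$. (4) $\dim_H X=\frac{\log 2}{\log A}<\dim_P X=\frac{\log 2}{\log B}$.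
   Context: Let $\mathcal A=\{0,1\}$. Fix real numbers $A>B>2$, real numbers $p,q$ with $0<p,q\le 1/2$, and a strictly increasing sequence of integers $\mathcal N=(N_i)_{i\ge 0}$ with $N_0=0$. For $n\ge 1$, call $n$ of type A if $N_{2i}<n\le N_{2i+1}$ for some $i\ge 0$, and of type B if $N_{2i+1}<n\le N_{2i+2}$ for some $i\ge0$; put $(r_n,\rho_n)=(A,p)$ if $n$ is of type A and $(r_n,\rho_n)=(B,q)$ if $n$ is of type B. Define closed intervals $I_w$, $w\in\mathcal A^n$, recursively: $I_\emptyset=[0,1]$, and if $w\in\mathcal A^{n-1}$ and $I_w=[x_w,x_w+\ell]$ then $I_{w0}=[x_w,x_w+\ell/r_n]$ and $I_{w1}=[x_w+\ell-\ell/r_n,\,x_w+\ell]$. Let $X=X(A,B,\mathcal N)=\bigcap_{n\ge1}\bigcup_{w\in\mathcal A^n}I_w$. Let $\mu=\mu_{(p,q,\mathcal N)}$ be the unique Borel probability measure on $X$ with $\mu(I_\emptyset)=1$ and, for $w\in\mathcal A^{n-1}$, $\mu(I_{w0})=\rho_n\mu(I_w)$, $\mu(I_{w1})=(1-\rho_n)\mu(I_w)$; its support is $X$. Standing assumptions: $\lim_{i\to\infty}N_{i+1}/N_i=\infty$ and $-\frac{\log p}{\log A}<-\frac{\log(1-q)}{\log B}$. For a Borel probability measure $\nu$ on $\mathbb R$ and $x$, the lower and upper local dimensions are $\underline{\dim}_{\rm loc}(\nu,x)=\liminf_{r\to0^+}\frac{\log\nu(B(x,r))}{\log r}$ and $\overline{\dim}_{\rm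 loc}(\nu,x)=\limsup_{r\to0^+}\frac{\log\nu(B(x,r))}{\log r}$, where $B(x,r)$ is the closed ball. $\dim_H$, $\dim_P$ denote Hausdorff and packing dimension. *)

(* Defs.v *)
From Stdlib Require Import Reals Lra List ClassicalEpsilon.
Open Scope R_scope.

Fixpoint fsum (f : nat -> R) (n : nat) : R :=
  match n with O => 0 | S k => fsum f k + f k end.

Definition is_lower_bound (E : R -> Prop) (m : R) : Prop := forall y, E y -> m <= y.
Definition is_glb (E : R -> Prop) (m : R) : Prop :=
  is_lower_bound E m /\ (forall m', is_lower_bound E m' -> m' <= m).

(** infimum of a set of reals (junk value 0 if the infimum does not exist in R) *)
Definition Rinf (E : R -> Prop) : R :=
  match excluded_middle_informative (exists m, is_glb E m) with
  | left H => proj1_sig (constructive_indefinite_description _ H)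
  | right _ => 0
  end.

(** d^s with the convention 0^s = 0 for s > 0 and 0^0 = 1 *)
Definition pw (d s : R) : R :=
  if Rlt_dec 0 d then Rpower d s else (if Req_EM_T s 0 then 1 else 0).

Definition is_liminf0 (f : R -> R) (d : R) : Prop :=
  forall eps, 0 < eps ->
    (exists delta, 0 < delta /\ forall r, 0 < r < delta -> d - eps < f r) /\
    (forall delta, 0 < delta -> exists r, 0 < r < delta /\ f r < d + eps).
Definition is_limsup0 (f : R -> R) (d : R) : Prop :=
  forall eps, 0 < eps ->
    (exists delta, 0 < delta /\ forall r, 0 < r < delta -> f r < d + eps) /\
    (forall delta, 0 < delta -> exists r, 0 < r < delta /\ d - eps < f r).

(** * Hausdorff dimension of a subset of R.
    For subsets of R, covers by arbitrary sets may be replaced by covers by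
    closed intervals [a i, b i] (same diameters). *)
Definition delta_cover (delta : R) (E : R -> Prop) (a b : nat -> R) : Prop :=
  (forall i, a i <= b i <= a i + delta) /\
  (forall x, E x -> exists i, a i <= x <= b i).

Definition Hzero (s : R) (E : R -> Prop) : Prop :=
  forall delta eps, 0 < delta -> 0 < eps ->
    exists a b, delta_cover delta E a b /\
      forall n, fsum (fun i => pw (b i - a i) s) n <= eps.

Definition dimH (E : R -> Prop) : R := Rinf (fun s => 0 <= s /\ Hzero s E).

Definition delta_packing (delta : R) (F : R -> Prop) (k : nat) (c rr : nat -> R) : Prop :=
  (forall i, (i < k)%nat -> F (c i) /\ 0 < rr i <= delta) /\
  (forall i j, (i < k)%nat -> (j < k)%nat -> i <> j -> rr i + rr j < Rabs (c i - c j)).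

(** packing premeasure  P_0^s(F) <= a ,  P_0^s(F) = lim_{delta->0} sup_packings sum (2 r_i)^s *)
Definition P0_le (s : R) (F : R -> Prop) (a : R) : Prop :=
  forall eta, 0 < eta -> exists delta, 0 < delta /\
    forall k c rr, delta_packing delta F k c rr ->
      fsum (fun i => pw (2 * rr i) s) k <= a + eta.

(** packing measure P^s(E) = inf { sum_i P_0^s(E_i) : E subset U_i E_i } = 0 *)
Definition Pzero (s : R) (E : R -> Prop) : Prop :=
  forall eps, 0 < eps ->
    exists (F : nat -> R -> Prop) (a : nat -> R),
      (forall x, E x -> exists i, F i x) /\
      (forall i, P0_le s (F i) (a i)) /\
      (forall n, fsum a n <= eps).

Definition dimP (E : R -> Prop) : R := Rinf (fun s => 0 <= s /\ Pzero s E).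

Definition typeA (N : nat -> nat) (n : nat) : Prop :=
  exists i, (N (2 * i) < n <= N (2 * i + 1))%nat.
Definition typeB (N : nat -> nat) (n : nat) : Prop :=
  exists i, (N (2 * i + 1) < n <= N (2 * i + 2))%nat.

(** (r_n, rho_n); for n >= 1 and N strictly increasing with N 0 = 0,
    "not type A" is equivalent to "type B" *)
Definition rr (A B : R) (N : nat -> nat) (n : nat) : R :=
  if excluded_middle_informative (typeA N n) then A else B.
Definition rho (p q : R) (N : nat -> nat) (n : nat) : R :=
  if excluded_middle_informative (typeA N n) then p else q.

Fixpoint lenI (A B : R) (N : nat -> nat) (n : nat) : R :=
  match n with O => 1 | S k => lenI A B N k / rr A B N (S k) end.

(** words are lists of bits (false = 0, true = 1), first letter first;
    leftI_aux w k = left endpoint offset contributed by letters k+1, k+2, ... *)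
Fixpoint leftI_aux (A B : R) (N : nat -> nat) (w : list bool) (k : nat) : R :=
  match w with
  | nil => 0
  | b :: w' => (if b then lenI A B N k - lenI A B N (S k) else 0)
               + leftI_aux A B N w' (S k)
  end.
Definition leftI (A B : R) (N : nat -> nat) (w : list bool) : R := leftI_aux A B N w 0.
Definition inI (A B : R) (N : nat -> nat) (w : list bool) (x : R) : Prop :=
  leftI A B N w <= x <= leftI A B N w + lenI A B N (length w).

Fixpoint muI_aux (p q : R) (N : nat -> nat) (w : list bool) (k : nat) : R :=
  match w with
  | nil => 1
  | b :: w' => (if b then 1 - rho p q N (S k) else rho p q N (S k)) * muI_aux p q N w' (S k)
  end.
Definition muI (p q : R) (N : nat -> nat) (w : list bool) : R := muI_aux p q N w 0.

Fixpoint words (n : nat) : list (list bool) :=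
  match n with
  | O => nil :: nil
  | S k => flat_map (fun w => (false :: w) :: (true :: w) :: nil) (words k)
  end.

Definition inX (A B : R) (N : nat -> nat) (x : R) : Prop :=
  forall n, (1 <= n)%nat -> exists w, length w = n /\ inI A B N w x.

Definition Sball (A B p q : R) (N : nat -> nat) (x r : R) (n : nat) : R :=
  fold_right Rplus 0
    (map (fun w =>
            if Rle_dec (leftI A B N w) (x + r) then
              if Rle_dec (x - r) (leftI A B N w + lenI A B N n) then muI p q N w else 0
            else 0) (words n)).

(** mu(B(x,r)) for the closed ball: mu of a compact set K is the infimum over n
    of the mass of the level-n intervals meeting K *)
Definition muBall (A B p q : R) (N : nat -> nat) (x r : R) : R :=
  Rinf (fun y => exists n, y = Sball A B p q N x r n).

Definition lower_ldim (A B p q : R) (N : nat -> nat) (x d : R) : Prop :=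
  is_liminf0 (fun r => ln (muBall A B p q N x r) / ln r) d.
Definition upper_ldim (A B p q : R) (N : nat -> nat) (x d : R) : Prop :=
  is_limsup0 (fun r => ln (muBall A B p q N x r) / ln r) d.

(** E is mu-null: for every eps it is covered by countably many intervals I_w of
    total mass <= eps (outer measure generated by mu on the I_w) *)
Definition mu_null (A B p q : R) (N : nat -> nat) (E : R -> Prop) : Prop :=
  forall eps, 0 < eps -> exists c : nat -> list bool,
    (forall x, E x -> exists i, inI A B N (c i) x) /\
    (forall n, fsum (fun i => muI p q N (c i)) n <= eps).

Definition entropy (t : R) : R := - t * ln t - (1 - t) * ln (1 - t).

(* Main.v *)
Require Import Defs.
From Stdlib Require Import Reals Lra Lia List Arith ClassicalEpsilon Classical.
Open Scope R_scope.

Lemma glb_exists (E : R -> Prop) : (exists y, E y) -> (exists m, is_lower_bound E m) -> exists m, is_glb E m.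
Proof.
  intros [y Hy] [m Hm].
  destruct (completeness (fun z => E (-z))) as [l [Hl1 Hl2]].
  - exists (-m). intros z Hz. specialize (Hm _ Hz). lra.
  - exists (-y). rewrite Ropp_involutive; auto.
  - exists (-l). split.
    + intros z Hz. assert (-z <= l) by (apply Hl1; rewrite Ropp_involutive; auto). lra.
    + intros m' Hm'. assert (l <= -m'). { apply Hl2. intros z Hz. specialize (Hm' _ Hz). lra. } lra.
Qed.

Lemma Rinf_glb E : (exists y, E y) -> (exists m, is_lower_bound E m) -> is_glb E (Rinf E).
Proof.
  intros H1 H2. unfold Rinf. destruct (excluded_middle_informative _) as [H|H].
  - exact (proj2_sig (constructive_indefinite_description _ H)).
  - exfalso; apply H; apply glb_exists; auto.
Qed.

Lemma glb_unique E m1 m2 : is_glb E m1 -> is_glb E m2 -> m1 = m2.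
Proof.
  intros [H1 H2] [H3 H4]. apply Rle_antisym; auto.
Qed.

Lemma Rinf_unique E m : is_glb E m -> Rinf E = m.
Proof.
  intros H. unfold Rinf. destruct (excluded_middle_informative _) as [H'|H'].
  - apply (glb_unique E); auto. exact (proj2_sig (constructive_indefinite_description _ H')).
  - exfalso; apply H'; eauto.
Qed.

Fixpoint pre (d : nat -> bool) (n : nat) : list bool :=
  match n with O => nil | S k => pre d k ++ (d k :: nil) end.

Lemma pre_length d n : length (pre d n) = n.
Proof. induction n; simpl; auto. rewrite length_app, IHn; simpl; lia. Qed.


Definition ev_lb (f : R -> R) c := exists delta, 0 < delta /\ forall r, 0 < r < delta -> c <= f r.

Lemma liminf_exists f : (exists c, ev_lb f c) ->
  (exists U, forall delta, 0 < delta -> exists r, 0 < r < delta /\ f r <= U) -> exists d, is_liminf0 f d.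
Proof.
  intros [c0 Hc0] [U HU].
  destruct (completeness (ev_lb f)) as [l [Hl1 Hl2]].
  - exists U. intros c [delta [Hd Hc]]. destruct (HU delta Hd) as [r [Hr Hf]].
    specialize (Hc r Hr). lra.
  - exists c0; auto.
  - exists l. intros eps Heps. split.
    + destruct (classic (exists c, ev_lb f c /\ l - eps < c)) as [[c [[delta [Hd Hc]] Hlc]]|Hn].
      * exists delta; split; auto. intros r Hr. specialize (Hc r Hr). lra.
      * exfalso. assert (l <= l - eps); [|lra]. apply Hl2. intros c Hc.
        destruct (Rle_dec c (l - eps)); auto. exfalso; apply Hn; exists c; split; auto; lra.
    + intros delta Hd. destruct (classic (exists r, 0 < r < delta /\ f r < l + eps)) as [H|H]; auto.
      exfalso. assert (l + eps <= l); [|lra]. apply Hl1. exists delta; split; auto.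
      intros r Hr. destruct (Rle_dec (l + eps) (f r)); auto. exfalso; apply H; exists r; split; auto; lra.
Qed.

Lemma limsup_of_liminf f e : is_liminf0 (fun r => - f r) e -> is_limsup0 f (- e).
Proof.
  intros H eps Heps. destruct (H eps Heps) as [[delta [Hd H1]] H2]. split.
  - exists delta; split; auto. intros r Hr. specialize (H1 r Hr). lra.
  - intros delta' Hd'. destruct (H2 delta' Hd') as [r [Hr Hf]]. exists r; split; auto; lra.
Qed.

Lemma liminf_ge f d c : is_liminf0 f d -> (forall eps, 0 < eps -> exists delta, 0 < delta /\ forall r, 0 < r < delta -> c - eps < f r) -> c <= d.
Proof.
  intros H1 H2. destruct (Rle_dec c d) as [|Hn]; auto. exfalso.
  set (eps := (c - d) / 3).
  destruct (H2 eps ltac:(unfold eps; lra)) as [delta [Hd Hf]].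
  destruct (proj2 (H1 eps ltac:(unfold eps; lra)) delta Hd) as [r [Hr Hf']].
  specialize (Hf r Hr). unfold eps in *. lra.
Qed.
Lemma liminf_le f d c : is_liminf0 f d -> (forall eps, 0 < eps -> forall delta, 0 < delta -> exists r, 0 < r < delta /\ f r < c + eps) -> d <= c.
Proof.
  intros H1 H2. destruct (Rle_dec d c) as [|Hn]; auto. exfalso.
  set (eps := (d - c) / 3).
  destruct (proj1 (H1 eps ltac:(unfold eps; lra))) as [delta [Hd Hf]].
  destruct (H2 eps ltac:(unfold eps; lra) delta Hd) as [r [Hr Hf']].
  specialize (Hf r Hr). unfold eps in *. lra.
Qed.
Lemma limsup_le f d c : is_limsup0 f d -> (forall eps, 0 < eps -> exists delta, 0 < delta /\ forall r, 0 < r < delta -> f r < c + eps) -> d <= c.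
Proof.
  intros H1 H2. destruct (Rle_dec d c) as [|Hn]; auto. exfalso.
  set (eps := (d - c) / 3).
  destruct (H2 eps ltac:(unfold eps; lra)) as [delta [Hd Hf]].
  destruct (proj2 (H1 eps ltac:(unfold eps; lra)) delta Hd) as [r [Hr Hf']].
  specialize (Hf r Hr). unfold eps in *. lra.
Qed.
Lemma limsup_ge f d c : is_limsup0 f d -> (forall eps, 0 < eps -> forall delta, 0 < delta -> exists r, 0 < r < delta /\ c - eps < f r) -> c <= d.
Proof.
  intros H1 H2. destruct (Rle_dec c d) as [|Hn]; auto. exfalso.
  set (eps := (c - d) / 3).
  destruct (proj1 (H1 eps ltac:(unfold eps; lra))) as [delta [Hd Hf]].
  destruct (H2 eps ltac:(unfold eps; lra) delta Hd) as [r [Hr Hf']].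
  specialize (Hf r Hr). unfold eps in *. lra.
Qed.

Lemma exp_le' x y : x <= y -> exp x <= exp y.
Proof. intros [H|H]; [left; apply exp_increasing; auto| subst; lra]. Qed.
Lemma Rpower_pos x s : 0 < Rpower x s.
Proof. unfold Rpower; apply exp_pos. Qed.
Lemma Rpower_le_base x y s : 0 <= s -> 0 < x <= y -> Rpower x s <= Rpower y s.
Proof. intros; apply Rle_Rpower_l; auto. Qed.
Lemma Rpower_mul x y s : 0 < x -> 0 < y -> Rpower (x * y) s = Rpower x s * Rpower y s.
Proof. intros; rewrite Rpower_mult_distr; auto. Qed.
Lemma Rpower_pow_base x n s : 0 < x -> Rpower (x ^ n) s = (Rpower x s) ^ n.
Proof.
  intros Hx. induction n. simpl. unfold Rpower. rewrite ln_1, Rmult_0_r, exp_0; reflexivity.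
  simpl. rewrite Rpower_mul, IHn; auto. apply pow_lt; auto.
Qed.
Lemma pow2_exp n : 2 ^ n = exp (INR n * ln 2).
Proof. rewrite <- Rpower_pow by lra. reflexivity. Qed.
Lemma pw_pos d s : 0 < d -> pw d s = Rpower d s.
Proof. intros H; unfold pw; destruct (Rlt_dec 0 d); [auto| lra]. Qed.
Lemma pw_zero s : s <> 0 -> pw 0 s = 0.
Proof. intros H; unfold pw; destruct (Rlt_dec 0 0); [lra|]. destruct (Req_EM_T s 0); [contradiction| auto]. Qed.
Lemma pw_nonneg d s : 0 <= pw d s.
Proof. unfold pw; destruct (Rlt_dec 0 d); [left; apply Rpower_pos|]. destruct (Req_EM_T s 0); lra. Qed.
Lemma pw_s0 d : pw d 0 = 1.
Proof. unfold pw; destruct (Rlt_dec 0 d). apply Rpower_O; auto. destruct (Req_EM_T 0 0); [auto| lra]. Qed.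

Lemma fsum_le f g n : (forall i, (i < n)%nat -> f i <= g i) -> fsum f n <= fsum g n.
Proof. induction n; intros H; simpl; [lra|]. pose proof (H n ltac:(lia)). pose proof (IHn ltac:(intros; apply H; lia)). lra. Qed.
Lemma fsum_nonneg f n : (forall i, (i < n)%nat -> 0 <= f i) -> 0 <= fsum f n.
Proof. induction n; intros H; simpl; [lra|]. pose proof (H n ltac:(lia)). pose proof (IHn ltac:(intros; apply H; lia)). lra. Qed.
Lemma fsum_mono f n m : (forall i, 0 <= f i) -> (n <= m)%nat -> fsum f n <= fsum f m.
Proof. intros H Hnm. induction Hnm; [lra|]. simpl. pose proof (H m). lra. Qed.
Lemma fsum_plus f g n : fsum (fun i => f i + g i) n = fsum f n + fsum g n.
Proof. induction n; simpl; [ring| rewrite IHn; ring]. Qed.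
Lemma fsum_scal c f n : fsum (fun i => c * f i) n = c * fsum f n.
Proof. induction n; simpl; [ring| rewrite IHn; ring]. Qed.
Lemma fsum_const c n : fsum (fun _ => c) n = INR n * c.
Proof. induction n; simpl fsum; [simpl; ring| rewrite IHn, S_INR; ring]. Qed.
Lemma fsum_ext f g n : (forall i, (i < n)%nat -> f i = g i) -> fsum f n = fsum g n.
Proof. induction n; intros H; simpl; auto. rewrite IHn, H; auto. Qed.
Lemma fsum_trunc g K c m : (forall j, 0 <= g j <= c) -> (forall j, (K <= j)%nat -> g j = 0) -> fsum g m <= INR K * c.
Proof.
  intros H1 H2. assert (forall m, fsum g m <= INR (Nat.min m K) * c).
  { induction m0; simpl fsum. simpl; lra.
    destruct (le_lt_dec K m0).
    - rewrite H2 by auto. rewrite !Nat.min_r by lia. rewrite Nat.min_r in IHm0 by lia. lra.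
    - rewrite !Nat.min_l in * by lia. rewrite S_INR. pose proof (H1 m0). lra. }
  eapply Rle_trans; [apply H|]. destruct (H1 0%nat).
  apply Rmult_le_compat_r; [lra|]. apply le_INR; lia.
Qed.
Lemma fsum_zero f n : (forall i, (i < n)%nat -> f i = 0) -> fsum f n = 0.
Proof. intros H. rewrite (fsum_ext f (fun _ => 0)); auto. rewrite fsum_const; ring. Qed.
Lemma fsum_ind_le1 f n : (forall i, (i < n)%nat -> f i = 0 \/ f i = 1) ->
  (forall i j, (i < n)%nat -> (j < n)%nat -> i <> j -> f i = 1 -> f j = 1 -> False) -> fsum f n <= 1.
Proof.
  induction n; intros H1 H2; simpl; [lra|].
  destruct (H1 n ltac:(lia)) as [E|E].
  - rewrite E. assert (fsum f n <= 1); [|lra]. apply IHn.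
    + intros; apply H1; lia.
    + intros i j Hi Hj Hij Fi Fj. apply (H2 i j); auto; lia.
  - rewrite E, fsum_zero; [lra|]. intros i Hi. destruct (H1 i ltac:(lia)) as [E'|E']; auto.
    exfalso; apply (H2 i n); auto; lia.
Qed.
Lemma fsum_S f n : fsum f (S n) = fsum f n + f n.
Proof. reflexivity. Qed.
Lemma fsum_geom eps n : fsum (fun i => eps / 2 ^ (S i)) n = eps * (1 - / 2 ^ n).
Proof.
  induction n. simpl; field.
  rewrite fsum_S, IHn. simpl pow. field; repeat split; try apply pow_nonzero; lra.
Qed.

Lemma glb_threshold (Z : R -> Prop) s0 : 0 <= s0 ->
  (forall s, s0 < s -> Z s) -> (forall s, 0 <= s < s0 -> ~ Z s) ->
  is_glb (fun s => 0 <= s /\ Z s) s0.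
Proof.
  intros H0 H1 H2. split.
  - intros y [Hy HZ]. destruct (Rle_dec s0 y) as [|Hn]; auto. exfalso; apply (H2 y); auto; lra.
  - intros m Hm. destruct (Rle_dec m s0) as [|Hn]; auto. exfalso.
    assert (m <= (s0 + m)/2); [|lra]. apply Hm. split; [lra|]. apply H1; lra.
Qed.
Section Main.
Variables (A B p q : R) (N : nat -> nat).
Hypothesis hB : 2 < B.
Hypothesis hAB : B < A.
Hypothesis hp : 0 < p <= 1/2.
Hypothesis hq : 0 < q <= 1/2.
Hypothesis hN0 : N 0%nat = 0%nat.
Hypothesis hNinc : forall i, (N i < N (S i))%nat.
Hypothesis hNratio : forall M : R, exists i0, forall i, (i0 <= i)%nat -> M < INR (N (S i)) / INR (N i).
Hypothesis hexp : - ln p / ln A < - ln (1 - q) / ln B.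

Notation ell := (lenI A B N).
Notation r := (rr A B N).
Notation rh := (rho p q N).

Lemma rr_cases k : r k = A \/ r k = B.
Proof. unfold rr; destruct (excluded_middle_informative _); auto. Qed.
Lemma rr_ge k : B <= r k.
Proof. destruct (rr_cases k) as [->| ->]; lra. Qed.
Lemma rr_le k : r k <= A.
Proof. destruct (rr_cases k) as [->| ->]; lra. Qed.
Lemma rho_cases k : rh k = p \/ rh k = q.
Proof. unfold rho; destruct (excluded_middle_informative _); auto. Qed.
Lemma rho_pos k : 0 < rh k.
Proof. destruct (rho_cases k) as [->| ->]; lra. Qed.
Lemma rho_le k : rh k <= 1/2.
Proof. destruct (rho_cases k) as [->| ->]; lra. Qed.

Lemma ell_S n : ell (S n) = ell n / r (S n).
Proof. reflexivity. Qed.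
Lemma ell_pos n : 0 < ell n.
Proof.
  induction n; simpl; [lra|]. apply Rdiv_lt_0_compat; auto.
  pose proof (rr_ge (S n)); lra.
Qed.
Lemma ell_eq n : ell n = r (S n) * ell (S n).
Proof. rewrite ell_S. field. pose proof (rr_ge (S n)); lra. Qed.
Lemma ell_S_le n : ell (S n) <= ell n / B.
Proof.
  rewrite ell_S. unfold Rdiv. apply Rmult_le_compat_l. left; apply ell_pos.
  apply Rinv_le_contravar; [lra| apply rr_ge].
Qed.
Lemma ell_S_ge n : ell n / A <= ell (S n).
Proof.
  rewrite ell_S. unfold Rdiv. apply Rmult_le_compat_l. left; apply ell_pos.
  apply Rinv_le_contravar; [pose proof (rr_ge (S n)); lra| apply rr_le].
Qed.
Lemma ell_S_lt n : ell (S n) < ell n.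
Proof.
  pose proof (ell_S_le n). pose proof (ell_pos n).
  assert (ell n / B < ell n). { apply Rmult_lt_reg_r with B; [lra|].
    unfold Rdiv; rewrite Rmult_assoc, Rinv_l; nra. } lra.
Qed.
Lemma ell_mono n m : (n <= m)%nat -> ell m <= ell n.
Proof.
  induction 1; [lra|]. pose proof (ell_S_lt m); lra.
Qed.
Lemma ell_add n k : ell (n + k) <= ell n * (/B)^k.
Proof.
  induction k.
  - rewrite Nat.add_0_r; simpl; lra.
  - rewrite Nat.add_succ_r. pose proof (ell_S_le (n+k)).
    assert (ell (n+k) / B <= ell n * (/B)^k / B).
    { unfold Rdiv. apply Rmult_le_compat_r; [left; apply Rinv_0_lt_compat; lra| auto]. }
    assert (E: (/B)^(S k) = (/B)^k * /B) by (simpl; ring). rewrite E, <- Rmult_assoc.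
    unfold Rdiv in *. lra.
Qed.
Lemma ell_le_pow n : ell n <= (/B)^n.
Proof. pose proof (ell_add 0 n). rewrite Nat.add_0_l in H. change (ell 0) with 1 in H. lra. Qed.
Lemma ell_ge_pow n : (/A)^n <= ell n.
Proof.
  induction n; [simpl; lra|].
  change ((/A)^(S n)) with (/A * (/A)^n).
  pose proof (ell_S_ge n).
  assert (/A * (/A)^n <= ell n / A).
  { unfold Rdiv. rewrite Rmult_comm. apply Rmult_le_compat_r; [left; apply Rinv_0_lt_compat; lra|auto]. }
  lra.
Qed.
Lemma ell_le1 n : ell n <= 1.
Proof. pose proof (ell_mono 0 n ltac:(lia)). simpl in H. lra. Qed.

Definition SW (n : nat) (g : list bool -> R) : R := fold_right Rplus 0 (map g (words n)).

Lemma SW_S n g : SW (S n) g = SW n (fun w => g (false :: w) + g (true :: w)).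
Proof. unfold SW; simpl. induction (words n) as [|w l IH]; simpl; [ring| rewrite IH; ring]. Qed.
Lemma SW_0 g : SW 0 g = g nil.
Proof. unfold SW; simpl; ring. Qed.

Lemma SW_ext n g h : (forall w, length w = n -> g w = h w) -> SW n g = SW n h.
Proof.
  revert g h; induction n; intros g h H.
  - rewrite !SW_0; apply H; reflexivity.
  - rewrite !SW_S; apply IHn. intros w Hw. rewrite !H; simpl; auto.
Qed.
Lemma SW_le n g h : (forall w, length w = n -> g w <= h w) -> SW n g <= SW n h.
Proof.
  revert g h; induction n; intros g h H.
  - rewrite !SW_0; apply H; reflexivity.
  - rewrite !SW_S; apply IHn. intros w Hw. pose proof (H (false::w)). pose proof (H (true::w)).
    simpl in *. rewrite Hw in *. specialize (H0 eq_refl). specialize (H1 eq_refl). lra.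
Qed.
Lemma SW_plus n g h : SW n (fun w => g w + h w) = SW n g + SW n h.
Proof. unfold SW; induction (words n); simpl; [ring| rewrite IHl; ring]. Qed.
Lemma SW_scal n c g : SW n (fun w => c * g w) = c * SW n g.
Proof. unfold SW; induction (words n); simpl; [ring| rewrite IHl; ring]. Qed.
Lemma SW_const n c : SW n (fun _ => c) = c * 2^n.
Proof.
  revert c; induction n; intros c. rewrite SW_0; simpl; ring.
  rewrite SW_S. rewrite (SW_ext n _ (fun _ => 2 * c)) by (intros; ring).
  rewrite IHn; simpl; ring.
Qed.
Lemma SW_ge0 n g : (forall w, length w = n -> 0 <= g w) -> 0 <= SW n g.
Proof.
  intros H. rewrite <- (Rmult_0_l (2^n)), <- (SW_const n 0). apply SW_le; auto.
Qed.
Lemma SW_ge_one n g w0 : (forall w, length w = n -> 0 <= g w) -> length w0 = n -> g w0 <= SW n g.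
Proof.
  revert g w0; induction n; intros g w0 H Hl.
  - destruct w0; [|discriminate]. rewrite SW_0; lra.
  - destruct w0 as [|b w0]; [discriminate|]. simpl in Hl. injection Hl as Hl.
    rewrite SW_S.
    assert (g (b::w0) <= g (false::w0) + g (true::w0)).
    { pose proof (H (false::w0)); pose proof (H (true::w0)); simpl in *.
      rewrite Hl in *. specialize (H0 eq_refl); specialize (H1 eq_refl). destruct b; lra. }
    eapply Rle_trans; [exact H0|].
    apply (IHn (fun w => g (false :: w) + g (true :: w))); auto.
    intros w Hw. pose proof (H (false::w)); pose proof (H (true::w)); simpl in *.
    rewrite Hw in *. specialize (H1 eq_refl); specialize (H2 eq_refl). lra.
Qed.
Lemma SW_single n g w0 : (forall w, length w = n -> w <> w0 -> g w = 0) -> length w0 = n -> SW n g = g w0.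
Proof.
  revert g w0; induction n; intros g w0 H Hl.
  - destruct w0; [|discriminate]. rewrite SW_0; auto.
  - destruct w0 as [|b w0]; [discriminate|]. simpl in Hl. injection Hl as Hl.
    rewrite SW_S.
    rewrite (IHn (fun w => g (false :: w) + g (true :: w)) w0); auto.
    + destruct b; [rewrite (H (false::w0)) | rewrite (H (true::w0))]; simpl; auto; try lra; congruence.
    + intros w Hw Hne. rewrite !H; simpl; auto; try lra; congruence.
Qed.
Lemma SW_app n j g : SW (n + j) g = SW n (fun w => SW j (fun v => g (w ++ v))).
Proof.
  revert g; induction n; intros g.
  - simpl. rewrite SW_0. reflexivity.
  - simpl plus. rewrite !SW_S. rewrite IHn. apply SW_ext. intros w _.
    rewrite <- SW_plus. reflexivity.
Qed.

Lemma words_length n w : In w (words n) -> length w = n.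
Proof.
  revert w; induction n; intros w H; simpl in H.
  - destruct H as [<-|[]]; reflexivity.
  - apply in_flat_map in H. destruct H as [u [Hu Hw]].
    simpl in Hw. destruct Hw as [<-|[<-|[]]]; simpl; f_equal; auto.
Qed.
Lemma words_In n w : length w = n -> In w (words n).
Proof.
  revert w; induction n; intros w H.
  - destruct w; [left; reflexivity| discriminate].
  - destruct w as [|b w]; [discriminate|]. simpl in H; injection H as H.
    simpl. apply in_flat_map. exists w; split; auto. destruct b; simpl; auto.
Qed.
Lemma words_len n : length (words n) = (2^n)%nat.
Proof.
  induction n; simpl; auto.
  assert (forall l : list (list bool), length (flat_map (fun w => (false :: w) :: (true :: w) :: nil) l) = (2 * length l)%nat).
  { induction l; simpl; auto. rewrite IHl. lia. }
  rewrite H, IHn. lia.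
Qed.
Lemma words_NoDup n : NoDup (words n).
Proof.
  induction n; simpl. constructor; [simpl; tauto| constructor].
  revert IHn. generalize (words n). intros l Hl.
  induction Hl as [|w l Hw Hl IH]; simpl. constructor.
  constructor.
  - intros [H|H]; try discriminate.
    apply in_flat_map in H. destruct H as [u [Hu H]]. simpl in H.
    destruct H as [H|[H|[]]]; injection H; intros; subst; tauto.
  - constructor; auto.
    intros H. apply in_flat_map in H. destruct H as [u [Hu H]]. simpl in H.
    destruct H as [H|[H|[]]]; injection H; intros; subst; tauto.
Qed.

Notation muA := (muI_aux p q N).
Notation leA := (leftI_aux A B N).

Lemma muI_aux_app w v k : muA (w ++ v) k = muA w k * muA v (k + length w).
Proof.
  revert k; induction w; intros k; simpl.
  - rewrite Nat.add_0_r; ring.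
  - rewrite IHw. replace (S k + length w)%nat with (k + S (length w))%nat by lia. ring.
Qed.
Lemma muI_aux_pos w k : 0 < muA w k.
Proof.
  revert k; induction w; intros k; simpl; [lra|].
  pose proof (rho_pos (S k)); pose proof (rho_le (S k)).
  apply Rmult_lt_0_compat; auto. destruct a; lra.
Qed.
Lemma muI_aux_le1 w k : muA w k <= 1.
Proof.
  revert k; induction w; intros k; simpl; [lra|].
  pose proof (rho_pos (S k)); pose proof (rho_le (S k)).
  pose proof (IHw (S k)); pose proof (muI_aux_pos w (S k)).
  destruct a; nra.
Qed.
Lemma muI_aux_sum n k : SW n (fun v => muA v k) = 1.
Proof.
  revert k; induction n; intros k.
  - rewrite SW_0; reflexivity.
  - rewrite SW_S. simpl. rewrite (SW_ext n _ (fun w => muA w (S k))).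
    apply IHn. intros; ring.
Qed.

Lemma leftI_app w v k : leA (w ++ v) k = leA w k + leA v (k + length w).
Proof.
  revert k; induction w; intros k; simpl.
  - rewrite Nat.add_0_r; ring.
  - rewrite IHw. replace (S k + length w)%nat with (k + S (length w))%nat by lia. ring.
Qed.
Lemma leftI_bnd v k : 0 <= leA v k /\ leA v k + ell (k + length v) <= ell k.
Proof.
  revert k; induction v; intros k; cbn [leftI_aux length].
  - rewrite Nat.add_0_r; lra.
  - destruct (IHv (S k)) as [H1 H2].
    replace (k + S (length v))%nat with (S k + length v)%nat by lia.
    pose proof (ell_S_lt k). destruct a; lra.
Qed.
Lemma inI_app w v x : inI A B N (w ++ v) x -> inI A B N w x.
Proof.
  unfold inI, leftI. rewrite leftI_app, length_app. simpl.
  destruct (leftI_bnd v (length w)). lra.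
Qed.
Lemma inI_sub w v : leftI A B N w <= leftI A B N (w ++ v) /\
   leftI A B N (w ++ v) + ell (length (w ++ v)) <= leftI A B N w + ell (length w).
Proof.
  unfold leftI. rewrite leftI_app, length_app. simpl.
  destruct (leftI_bnd v (length w)). lra.
Qed.

Lemma gap_lemma u : forall m w k, length u = m -> length w = m -> u <> w ->
  leA u k + (B-1) * ell (k+m) <= leA w k \/ leA w k + (B-1) * ell (k+m) <= leA u k.
Proof.
  induction u as [|a u IH]; intros m w k Hu Hw Hne.
  - subst m. destruct w; [congruence| discriminate].
  - destruct w as [|b w]; [simpl in *; subst; discriminate|].
    simpl in Hu, Hw. subst m. injection Hw as Hw.
    replace (k + S (length u))%nat with (S k + length u)%nat by lia.
    cbn [leftI_aux].
    destruct (leftI_bnd u (S k)) as [U1 U2]. destruct (leftI_bnd w (S k)) as [W1 W2].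
    rewrite Hw in W2.
    pose proof (ell_mono (S k) (S k + length u) ltac:(lia)).
    pose proof (ell_eq k). pose proof (rr_ge (S k)). pose proof (ell_pos (S k)).
    pose proof (ell_pos (S k + length u)).
    assert (Hg : (B-2) * ell (S k + length u) <= ell k - 2 * ell (S k)) by nra.
    destruct (Bool.bool_dec a b) as [<-|Hab].
    + assert (u <> w) by congruence.
      destruct (IH (length u) w (S k) eq_refl Hw H4); destruct a; lra.
    + destruct a, b; try congruence; lra.
Qed.

Lemma inI_unique u w x : length u = length w -> inI A B N u x -> inI A B N w x -> u = w.
Proof.
  intros Hl Hu Hw. destruct (list_eq_dec Bool.bool_dec u w) as [|Hne]; auto.
  exfalso. unfold inI, leftI in *. rewrite Hl in Hu.
  destruct (gap_lemma u (length w) w 0 Hl eq_refl Hne) as [G|G]; simpl in G;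
  pose proof (ell_pos (length w)); nra.
Qed.

Lemma address x : inX A B N x -> exists d, forall n, inI A B N (pre d n) x.
Proof.
  intros HX.
  assert (H : forall n, exists w, length w = n /\ inI A B N w x).
  { intros [|n]; [|apply HX; lia].
    destruct (HX 1%nat ltac:(lia)) as [w [Hl Hw]]. exists nil; split; auto.
    apply (inI_app nil w x); auto. }
  set (W := fun n => proj1_sig (constructive_indefinite_description _ (H n))).
  assert (HW : forall n, length (W n) = n /\ inI A B N (W n) x).
  { intros n. exact (proj2_sig (constructive_indefinite_description _ (H n))). }
  exists (fun k => nth k (W (S k)) false).
  assert (E : forall n, pre (fun k => nth k (W (S k)) false) n = W n).
  { induction n.
    - destruct (HW 0%nat) as [H0 _]. destruct (W 0%nat); [reflexivity| discriminate].
    - destruct (HW (S n)) as [H1 H2].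
      destruct (exists_last (l := W (S n))) as [u [b Hub]].
      { intro Hc; rewrite Hc in H1; discriminate. }
      rewrite Hub in H1, H2 |- *. rewrite length_app in H1. simpl in H1.
      assert (Hu : u = W n).
      { apply (inI_unique u (W n) x).
        - destruct (HW n); lia.
        - apply (inI_app u (b::nil) x); auto.
        - apply HW. }
      simpl. rewrite Hub, IHn, <- Hu. f_equal. f_equal.
      rewrite app_nth2 by lia. replace (n - length u)%nat with 0%nat by lia. reflexivity. }
  intros n. rewrite E. apply HW.
Qed.

Lemma Sball_SW x r n : Sball A B p q N x r n =
  SW n (fun w => if Rle_dec (leftI A B N w) (x + r) then
              if Rle_dec (x - r) (leftI A B N w + ell n) then muI p q N w else 0
            else 0).
Proof. reflexivity. Qed.

Lemma Sball_nonneg x r n : 0 <= Sball A B p q N x r n.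
Proof.
  rewrite Sball_SW. apply SW_ge0. intros w _.
  pose proof (muI_aux_pos w 0).
  destruct (Rle_dec _ _); [destruct (Rle_dec _ _)|]; unfold muI; lra.
Qed.

Lemma muBall_glb x r : is_glb (fun y => exists n, y = Sball A B p q N x r n) (muBall A B p q N x r).
Proof.
  apply Rinf_glb. exists (Sball A B p q N x r 0); eauto.
  exists 0. intros y [n ->]. apply Sball_nonneg.
Qed.

Lemma muBall_le x r n : muBall A B p q N x r <= Sball A B p q N x r n.
Proof. apply (proj1 (muBall_glb x r)). eauto. Qed.

Lemma muBall_ge x r c : (forall n, c <= Sball A B p q N x r n) -> c <= muBall A B p q N x r.
Proof. intros H. apply (proj2 (muBall_glb x r)). intros y [n ->]. auto. Qed.

Lemma ball_lb x r w : inI A B N w x -> ell (length w) <= r -> muI p q N w <= muBall A B p q N x r.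
Proof.
  intros Hx Hr. apply muBall_ge. intros n. rewrite Sball_SW.
  set (m := length w) in *.
  assert (Hnn : forall n w, length w = n -> 0 <= (if Rle_dec (leftI A B N w) (x + r) then
              if Rle_dec (x - r) (leftI A B N w + ell n) then muI p q N w else 0
            else 0)).
  { intros n0 w0 _. pose proof (muI_aux_pos w0 0).
    destruct (Rle_dec _ _); [destruct (Rle_dec _ _)|]; unfold muI; lra. }
  destruct (le_lt_dec m n) as [Hmn|Hmn].
  - replace n with (m + (n - m))%nat by lia. rewrite SW_app.
    eapply Rle_trans; [|apply SW_ge_one; [|exact (eq_refl m)]].
    2:{ intros u Hu. apply SW_ge0. intros v Hv. apply Hnn. rewrite length_app; lia. }
    rewrite (SW_ext _ _ (fun v => muI p q N w * muA v m)).
    + rewrite SW_scal, muI_aux_sum by auto. lra.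
    + intros v Hv. unfold inI in Hx. fold m in Hx. destruct (inI_sub w v) as [S1 S2].
      rewrite length_app in S2. fold m in S2. rewrite Hv in S2.
      pose proof (ell_pos (m + (n - m))).
      destruct (Rle_dec _ _); [destruct (Rle_dec _ _)|]; try lra.
      unfold muI. rewrite muI_aux_app; auto.
  - assert (Hw : w = firstn n w ++ skipn n w) by (symmetry; apply firstn_skipn).
    assert (Hl : length (firstn n w) = n) by (rewrite firstn_length; lia).
    eapply Rle_trans; [|apply SW_ge_one; [apply Hnn| exact Hl]].
    assert (Hxu : inI A B N (firstn n w) x) by (apply (inI_app _ (skipn n w)); rewrite <- Hw; auto).
    unfold inI in Hxu. rewrite Hl in Hxu.
    pose proof (ell_pos n). pose proof (ell_pos m).
    assert (0 < r) by lra.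
    destruct (Rle_dec _ _); [destruct (Rle_dec _ _)|]; try lra.
    unfold muI. rewrite Hw at 1. rewrite muI_aux_app; auto.
    pose proof (muI_aux_pos (firstn n w) 0).
    pose proof (muI_aux_le1 (skipn n w) (0 + length (firstn n w))). nra.
Qed.

Lemma ball_ub x r w : inI A B N w x -> 0 < r -> r < (B-2) * ell (length w) -> muBall A B p q N x r <= muI p q N w.
Proof.
  intros Hx Hr0 Hr. eapply Rle_trans; [apply (muBall_le x r (length w))|].
  rewrite Sball_SW. set (m := length w) in *.
  rewrite (SW_single _ _ w).
  - pose proof (muI_aux_pos w 0).
    destruct (Rle_dec _ _); [destruct (Rle_dec _ _)|]; unfold muI in *; lra.
  - intros u Hu Hne. unfold inI, leftI in *. fold m in Hx.
    pose proof (ell_pos m).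
    destruct (gap_lemma u m w 0 Hu eq_refl Hne) as [G|G]; simpl in G.
    + destruct (Rle_dec _ _); [destruct (Rle_dec _ _)|]; auto. nra.
    + destruct (Rle_dec _ _); auto. nra.
  - reflexivity.
Qed.

Lemma ln_le' x y : 0 < x -> x <= y -> ln x <= ln y.
Proof. intros Hx [H|H]; [left; apply ln_increasing; auto| subst; lra]. Qed.
Lemma ln_lt0 x : 0 < x -> x < 1 -> ln x < 0.
Proof. intros; rewrite <- ln_1; apply ln_increasing; auto. Qed.
Lemma ln_le0 x : 0 < x -> x <= 1 -> ln x <= 0.
Proof. intros; rewrite <- ln_1; apply ln_le'; auto. Qed.
Lemma ln_gt0 x : 1 < x -> 0 < ln x.
Proof. intros; rewrite <- ln_1; apply ln_increasing; lra. Qed.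
Lemma ratio_ge u v a b : 0 <= a <= u -> 0 < v <= b -> a / b <= u / v.
Proof.
  intros [Ha Hu] [Hv Hb]. unfold Rdiv.
  apply Rle_trans with (a * / v).
  - apply Rmult_le_compat_l; auto. apply Rinv_le_contravar; auto.
  - apply Rmult_le_compat_r; auto. left; apply Rinv_0_lt_compat; auto.
Qed.
Lemma ratio_le u v a b : 0 <= u <= a -> 0 < b <= v -> u / v <= a / b.
Proof. intros. apply ratio_ge; lra. Qed.
Lemma div_ge_iff a b c : 0 < b -> c * b <= a -> c <= a / b.
Proof.
  intros Hb H. apply Rmult_le_reg_r with b; auto. unfold Rdiv.
  rewrite Rmult_assoc, Rinv_l, Rmult_1_r; lra.
Qed.
Lemma div_gt_iff a b c : 0 < b -> c * b < a -> c < a / b.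
Proof.
  intros Hb H. apply Rmult_lt_reg_r with b; auto. unfold Rdiv.
  rewrite Rmult_assoc, Rinv_l, Rmult_1_r; lra.
Qed.
Lemma div_le_iff a b c : 0 < b -> a <= c * b -> a / b <= c.
Proof.
  intros Hb H. apply Rmult_le_reg_r with b; auto. unfold Rdiv.
  rewrite Rmult_assoc, Rinv_l, Rmult_1_r; lra.
Qed.
Lemma div_lt_iff a b c : 0 < b -> a < c * b -> a / b < c.
Proof.
  intros Hb H. apply Rmult_lt_reg_r with b; auto. unfold Rdiv.
  rewrite Rmult_assoc, Rinv_l, Rmult_1_r; lra.
Qed.
Lemma pow_small x y : 0 <= x < 1 -> 0 < y -> exists n0, forall n, (n0 <= n)%nat -> x ^ n < y.
Proof.
  intros Hx Hy. destruct (pow_lt_1_zero x ltac:(rewrite Rabs_right; lra) y Hy) as [n0 Hn].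
  exists n0. intros n Hn'. specialize (Hn n Hn'). rewrite Rabs_right in Hn; auto.
  apply Rle_ge, pow_le; lra.
Qed.
Lemma pow_decr x n m : 0 <= x <= 1 -> (n <= m)%nat -> x ^ m <= x ^ n.
Proof.
  intros Hx H. induction H; [lra|]. simpl. pose proof (pow_le x m ltac:(lra)). nra.
Qed.
Lemma Rinv_lt_1 x : 1 < x -> / x < 1.
Proof. intros H. rewrite <- Rinv_1. apply Rinv_lt_contravar; lra. Qed.
Lemma nat_big y : exists n : nat, y < INR n.
Proof. destruct (INR_unbounded y) as [n Hn]; exists n; lra. Qed.

Lemma big_helper a n2 n eps lB : 0 < eps -> 0 < lB -> a / (eps * lB) < INR n2 -> (n2 <= n)%nat -> a < eps * (INR n * lB).
Proof.
  intros He Hl H Hn. apply le_INR in Hn.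
  assert (a < INR n2 * (eps * lB)).
  { apply Rmult_lt_compat_r with (r := eps * lB) in H; [|nra].
    unfold Rdiv in H. rewrite Rmult_assoc, Rinv_l in H by nra. lra. }
  assert (INR n2 * (eps * lB) <= INR n * (eps * lB)) by (apply Rmult_le_compat_r; nra).
  nra.
Qed.

Notation fr x := (fun r => ln (muBall A B p q N x r) / ln r).

Definition Lx n := - ln (ell n).
Definition mfac d n := if (d n : bool) then 1 - rh (S n) else rh (S n).
Definition Mx d n := - ln (muI p q N (pre d n)).
Definition Gm := - ln p - ln q.

Lemma Gm_pos : 0 < Gm.
Proof. unfold Gm. pose proof (ln_lt0 p ltac:(lra) ltac:(lra)). pose proof (ln_lt0 q ltac:(lra) ltac:(lra)). lra. Qed.

Lemma muI_pos w : 0 < muI p q N w.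
Proof. apply muI_aux_pos. Qed.
Lemma muI_le1 w : muI p q N w <= 1.
Proof. apply muI_aux_le1. Qed.

Lemma muI_pre_S d n : muI p q N (pre d (S n)) = muI p q N (pre d n) * mfac d n.
Proof.
  unfold muI. simpl pre. rewrite muI_aux_app, pre_length. simpl. unfold mfac. ring.
Qed.
Lemma mfac_bnd d n : rh (S n) <= mfac d n /\ mfac d n < 1.
Proof. unfold mfac. pose proof (rho_pos (S n)); pose proof (rho_le (S n)). destruct (d n); lra. Qed.
Lemma mstep_bnd d n : 0 < - ln (mfac d n) <= - ln (rh (S n)) /\ - ln (rh (S n)) <= Gm.
Proof.
  destruct (mfac_bnd d n). pose proof (rho_pos (S n)).
  pose proof (ln_lt0 (mfac d n) ltac:(lra) H0).
  pose proof (ln_le' _ _ H1 H).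
  pose proof (ln_lt0 p ltac:(lra) ltac:(lra)). pose proof (ln_lt0 q ltac:(lra) ltac:(lra)).
  unfold Gm. destruct (rho_cases (S n)) as [E|E]; rewrite E in *; lra.
Qed.
Lemma Mx_S d n : Mx d (S n) = Mx d n - ln (mfac d n).
Proof.
  unfold Mx. rewrite muI_pre_S, ln_mult; [ring| apply muI_pos|]. destruct (mfac_bnd d n).
  pose proof (rho_pos (S n)); lra.
Qed.
Lemma Mx_0 d : Mx d 0 = 0.
Proof. unfold Mx; simpl. unfold muI; simpl. rewrite ln_1; ring. Qed.
Lemma Mx_nonneg d n : 0 <= Mx d n.
Proof. unfold Mx. pose proof (ln_le0 _ (muI_pos (pre d n)) (muI_le1 _)). lra. Qed.
Lemma Mx_add d n k : Mx d (n + k) <= Mx d n + Gm * INR k.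
Proof.
  induction k. rewrite Nat.add_0_r; simpl; lra.
  rewrite Nat.add_succ_r, Mx_S, S_INR. destruct (mstep_bnd d (n+k)). lra.
Qed.
Lemma Mx_le d n : Mx d n <= Gm * INR n.
Proof. pose proof (Mx_add d 0 n). rewrite Mx_0 in H. simpl in H. lra. Qed.

Lemma Lx_S n : Lx (S n) = Lx n + ln (r (S n)).
Proof.
  unfold Lx. rewrite ell_S. unfold Rdiv. rewrite ln_mult, ln_Rinv. ring.
  all: pose proof (rr_ge (S n)); try apply Rinv_0_lt_compat; try apply ell_pos; lra.
Qed.
Lemma Lx_0 : Lx 0 = 0.
Proof. unfold Lx; simpl. rewrite ln_1; ring. Qed.
Lemma lnB_pos : 0 < ln B.
Proof. apply ln_gt0; lra. Qed.
Lemma lnA_pos : 0 < ln A.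
Proof. apply ln_gt0; lra. Qed.
Lemma lnB_le_lnA : ln B <= ln A.
Proof. apply ln_le'; lra. Qed.
Lemma ln_r_bnd k : ln B <= ln (r k) <= ln A.
Proof. pose proof (rr_ge k); pose proof (rr_le k). split; apply ln_le'; lra. Qed.
Lemma Lx_ge n : INR n * ln B <= Lx n.
Proof.
  induction n. rewrite Lx_0; simpl; lra.
  rewrite Lx_S, S_INR. pose proof (ln_r_bnd (S n)). lra.
Qed.
Lemma Lx_S_le n : Lx (S n) <= Lx n + ln A.
Proof. rewrite Lx_S. pose proof (ln_r_bnd (S n)). lra. Qed.
Lemma Lx_nonneg n : 0 <= Lx n.
Proof. pose proof (Lx_ge n). pose proof (pos_INR n). pose proof lnB_pos. nra. Qed.

Lemma muBall_le1 x r : muBall A B p q N x r <= 1.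
Proof.
  eapply Rle_trans; [apply (muBall_le x r 0)|]. rewrite Sball_SW, SW_0.
  pose proof (muI_le1 nil). destruct (Rle_dec _ _); [destruct (Rle_dec _ _)|]; lra.
Qed.

Lemma ell_small y : 0 < y -> exists n0, forall n, (n0 <= n)%nat -> ell n < y.
Proof.
  intros Hy. destruct (pow_small (/B) y) as [n0 Hn0]; auto.
  { split. left; apply Rinv_0_lt_compat; lra. apply Rinv_lt_1; lra. }
  exists n0. intros n Hn. pose proof (ell_le_pow n). specialize (Hn0 n Hn). lra.
Qed.

Section Addr.
Variable x : R.
Variable d : nat -> bool.
Hypothesis Hd : forall n, inI A B N (pre d n) x.

Lemma muBall_pos r : 0 < r -> 0 < muBall A B p q N x r.
Proof.
  intros Hr. destruct (ell_small r Hr) as [n0 Hn0].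
  eapply Rlt_le_trans; [apply (muI_pos (pre d n0))|].
  apply ball_lb; auto. rewrite pre_length. left; apply Hn0; lia.
Qed.

Lemma fr_eq r : 0 < r -> fr x r = (- ln (muBall A B p q N x r)) / (- ln r).
Proof.
  intros Hr. destruct (Req_dec (ln r) 0) as [E|E].
  - rewrite E. unfold Rdiv. rewrite Ropp_0, Rinv_0. ring.
  - field; auto.
Qed.

Lemma fr_nonneg r : 0 < r < 1 -> 0 <= fr x r.
Proof.
  intros Hr. cbv beta; rewrite fr_eq by lra.
  pose proof (ln_le0 _ (muBall_pos r ltac:(lra)) (muBall_le1 x r)).
  pose proof (ln_lt0 r ltac:(lra) ltac:(lra)).
  unfold Rdiv. apply Rmult_le_pos; [lra|]. left; apply Rinv_0_lt_compat; lra.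
Qed.

Lemma index_exists rad : 0 < rad < B - 2 -> exists n, (B-2) * ell (S n) <= rad < (B-2) * ell n.
Proof.
  intros Hr. destruct (ell_small (rad / (B-2))) as [m Hm].
  { apply Rdiv_lt_0_compat; lra. }
  specialize (Hm m (le_n m)).
  assert (Hm' : (B-2) * ell m <= rad).
  { apply Rmult_lt_compat_l with (r := B-2) in Hm; [|lra].
    unfold Rdiv in Hm. rewrite <- Rmult_assoc, (Rmult_comm (B-2) rad), Rmult_assoc, Rinv_r in Hm; lra. }
  clear Hm. induction m.
  - simpl in Hm'. lra.
  - destruct (Rlt_dec rad ((B-2) * ell m)) as [H|H].
    + exists m; split; auto.
    + apply IHm. lra.
Qed.

Lemma index_large rad n n1 : (B-2) * ell (S n) <= rad -> rad < (B-2) * (/A)^(S n1) -> (n1 <= n)%nat.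
Proof.
  intros H1 H2. destruct (le_lt_dec n1 n) as [|Hlt]; auto. exfalso.
  pose proof (ell_ge_pow (S n)).
  assert ((/A)^(S n1) <= (/A)^(S n)).
  { apply pow_decr; [|lia]. split. left; apply Rinv_0_lt_compat; lra.
    left; apply Rinv_lt_1; lra. }
  nra.
Qed.

Lemma transfer_A c : (exists n1, forall n, (n1 <= n)%nat -> c * Lx n <= Mx d n) ->
  forall eps, 0 < eps -> exists delta, 0 < delta /\ forall rad, 0 < rad < delta -> c - eps < fr x rad.
Proof.
  intros [n1 Hn1] eps Heps.
  set (C := ln A + Rabs (ln (B-2))).
  destruct (nat_big (Rabs c * C / (eps * ln B))) as [n2 Hn2].
  pose proof lnB_pos. pose proof lnA_pos.
  set (n3 := (n1 + n2 + 1)%nat).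
  assert (0 < (/A)^(S n3)). { apply pow_lt. apply Rinv_0_lt_compat; lra. }
  exists (Rmin 1 (Rmin (B-2) ((B-2) * (/A)^(S n3)))). split.
  { apply Rmin_pos; [lra|]. apply Rmin_pos; [lra|]. nra. }
  intros rad [Hr0 Hr]. pose proof (Rmin_l 1 (Rmin (B-2) ((B-2) * (/A)^(S n3)))).
  pose proof (Rmin_r 1 (Rmin (B-2) ((B-2) * (/A)^(S n3)))).
  pose proof (Rmin_l (B-2) ((B-2) * (/A)^(S n3))). pose proof (Rmin_r (B-2) ((B-2) * (/A)^(S n3))).
  destruct (index_exists rad) as [n [Hn1' Hn2']]; [lra|].
  assert (Hn : (n3 <= n)%nat) by (apply (index_large rad); lra).
  assert (Hmu : muBall A B p q N x rad <= muI p q N (pre d n)).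
  { apply ball_ub; auto. rewrite pre_length; auto. }
  pose proof (muBall_pos rad Hr0) as Hmp.
  assert (Hu : Mx d n <= - ln (muBall A B p q N x rad)).
  { unfold Mx. pose proof (ln_le' _ _ Hmp Hmu). lra. }
  assert (Hv0 : 0 < - ln rad) by (pose proof (ln_lt0 rad Hr0 ltac:(lra)); lra).
  assert (Hv : - ln rad <= Lx n + C).
  { assert (0 < ell (S n)) by apply ell_pos.
    assert (Q0 : 0 < (B-2) * ell (S n)) by nra.
    pose proof (ln_le' _ _ Q0 Hn1') as Q1. rewrite ln_mult in Q1 by lra.
    pose proof (Lx_S_le n) as Q2. unfold Lx in Q2. pose proof (Rle_abs (- ln (B-2))) as Q3.
    rewrite Rabs_Ropp in Q3. unfold C, Lx. lra. }
  pose proof (Lx_ge n). pose proof (Mx_nonneg d n).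
  assert (HLC : 0 < Lx n + C).
  { pose proof (Rabs_pos (ln (B-2))). unfold C. pose proof (Lx_nonneg n). lra. }
  cbv beta; rewrite fr_eq by lra.
  assert (Hr1 : Mx d n / (Lx n + C) <= (- ln (muBall A B p q N x rad)) / (- ln rad)).
  { apply ratio_ge; lra. }
  destruct (Rle_dec c 0) as [Hc|Hc].
  - assert (0 <= Mx d n / (Lx n + C)) by (apply div_ge_iff; lra). lra.
  - assert (c - eps < Mx d n / (Lx n + C)); [|lra].
    apply div_gt_iff; auto.
    specialize (Hn1 n ltac:(unfold n3 in Hn; lia)).
    assert (Q4 : Rabs c * C < eps * (INR n * ln B)).
    { apply (big_helper _ n2); auto. unfold n3 in Hn; lia. }
    rewrite Rabs_right in Q4 by lra.
    assert (eps * (INR n * ln B) <= eps * Lx n) by (apply Rmult_le_compat_l; lra).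
    assert (0 <= eps * C) by (apply Rmult_le_pos; [lra| unfold C; pose proof (Rabs_pos (ln (B-2))); lra]).
    lra.
Qed.

Lemma transfer_B c : (forall n1, exists n, (n1 <= n)%nat /\ Mx d n <= c * Lx n) ->
  forall delta, 0 < delta -> exists rad, 0 < rad < delta /\ fr x rad <= c.
Proof.
  intros H delta Hdel. destruct (ell_small (Rmin delta 1)) as [n0 Hn0].
  { apply Rmin_pos; lra. }
  destruct (H (n0 + 1)%nat) as [n [Hn Hc]].
  specialize (Hn0 n ltac:(lia)). pose proof (Rmin_l delta 1). pose proof (Rmin_r delta 1).
  pose proof (ell_pos n).
  exists (ell n). split; [lra|].
  pose proof (ball_lb x (ell n) (pre d n) (Hd n) ltac:(rewrite pre_length; lra)).
  pose proof (muI_pos (pre d n)).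
  cbv beta; rewrite fr_eq by lra.
  assert (HL : 0 < Lx n).
  { pose proof (Lx_ge n). pose proof lnB_pos. assert (1 <= INR n) by (replace 1 with (INR 1) by reflexivity; apply le_INR; lia). nra. }
  apply Rle_trans with (Mx d n / Lx n).
  - apply ratio_le; [|unfold Lx in *; lra]. split.
    + pose proof (ln_le0 _ (muBall_pos (ell n) H2) (muBall_le1 x (ell n))). lra.
    + unfold Mx. pose proof (ln_le' _ _ H4 H3). lra.
  - apply div_le_iff; auto.
Qed.

Lemma transfer_C c : (exists n1, forall n, (n1 <= n)%nat -> Mx d n <= c * Lx n) ->
  forall eps, 0 < eps -> exists delta, 0 < delta /\ forall rad, 0 < rad < delta -> fr x rad < c + eps.
Proof.
  intros [n1 Hn1] eps Heps.
  assert (HB1 : 0 <= /B < 1) by (split; [left; apply Rinv_0_lt_compat; lra| apply Rinv_lt_1; lra]).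
  destruct (pow_small (/B) (B-2) HB1 ltac:(lra)) as [K HK].
  specialize (HK K (le_n K)).
  set (E := Rabs (ln (B-2))).
  set (D := Gm * INR (S K)).
  pose proof lnB_pos. pose proof lnA_pos. pose proof Gm_pos.
  destruct (nat_big ((D + Rabs c * E + eps * E + 1) / (eps * ln B))) as [n2 Hn2].
  set (n3 := (n1 + n2 + 1)%nat).
  assert (0 < (/A)^(S n3)). { apply pow_lt. apply Rinv_0_lt_compat; lra. }
  exists (Rmin 1 (Rmin (B-2) ((B-2) * (/A)^(S n3)))). split.
  { apply Rmin_pos; [lra|]. apply Rmin_pos; [lra|]. nra. }
  intros rad [Hr0 Hr]. pose proof (Rmin_l 1 (Rmin (B-2) ((B-2) * (/A)^(S n3)))).
  pose proof (Rmin_r 1 (Rmin (B-2) ((B-2) * (/A)^(S n3)))).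
  pose proof (Rmin_l (B-2) ((B-2) * (/A)^(S n3))). pose proof (Rmin_r (B-2) ((B-2) * (/A)^(S n3))).
  destruct (index_exists rad) as [n [Hn1' Hn2']]; [lra|].
  assert (Hn : (n3 <= n)%nat) by (apply (index_large rad); lra).
  assert (Hell : ell (S n + K) <= rad).
  { pose proof (ell_add (S n) K). pose proof (ell_pos (S n)).
    assert (ell (S n) * (/B)^K <= ell (S n) * (B-2)) by (apply Rmult_le_compat_l; lra). nra. }
  pose proof (ball_lb x rad (pre d (S n + K)) (Hd _) ltac:(rewrite pre_length; auto)) as Q8.
  pose proof (muI_pos (pre d (S n + K))) as Q9.
  assert (Hu : - ln (muBall A B p q N x rad) <= Mx d n + D).
  { pose proof (ln_le' _ _ Q9 Q8) as Q10. pose proof (Mx_add d n (S K)) as Q11.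
    replace (n + S K)%nat with (S n + K)%nat in Q11 by lia. unfold Mx in *. unfold D. lra. }
  assert (Hu0 : 0 <= - ln (muBall A B p q N x rad)).
  { pose proof (ln_le0 _ (muBall_pos rad Hr0) (muBall_le1 x rad)). lra. }
  assert (Hv : Lx n - E <= - ln rad).
  { assert (0 < ell n) by apply ell_pos.
    pose proof (ln_le' _ _ Hr0 (Rlt_le _ _ Hn2')) as Q11. rewrite ln_mult in Q11 by lra.
    unfold Lx. pose proof (Rle_abs (ln (B-2))). unfold E. lra. }
  specialize (Hn1 n ltac:(unfold n3 in Hn; lia)).
  pose proof (Lx_ge n).
  assert (Hbig : D + Rabs c * E + eps * E + 1 < eps * (INR n * ln B)).
  { apply (big_helper _ n2); auto. unfold n3 in Hn; lia. }
  assert (HE : 0 <= E) by apply Rabs_pos.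
  assert (Q12 : eps * (INR n * ln B) <= eps * Lx n) by (apply Rmult_le_compat_l; lra).
  assert (Q13 : c * E <= Rabs c * E) by (apply Rmult_le_compat_r; [auto| apply Rle_abs]).
  assert (Q14 : 0 <= Rabs c * E) by (apply Rmult_le_pos; [apply Rabs_pos| auto]).
  assert (Q15 : 0 <= D) by (unfold D; pose proof (pos_INR (S K)); nra).
  assert (HLE : 0 < Lx n - E).
  { apply Rmult_lt_reg_l with eps; auto. lra. }
  cbv beta; rewrite fr_eq by lra.
  apply Rle_lt_trans with ((Mx d n + D) / (Lx n - E)).
  - apply ratio_le; lra.
  - apply div_lt_iff; auto. lra.
Qed.

Lemma transfer_D c : (forall n1, exists n, (n1 <= n)%nat /\ c * Lx n <= Mx d n) ->
  forall eps, 0 < eps -> forall delta, 0 < delta -> exists rad, 0 < rad < delta /\ c - eps < fr x rad.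
Proof.
  intros H eps Heps delta Hdel.
  set (kap := Rmin 1 ((B-2)/2)).
  assert (Hk : 0 < kap <= 1 /\ kap < B - 2).
  { unfold kap. pose proof (Rmin_l 1 ((B-2)/2)). pose proof (Rmin_r 1 ((B-2)/2)).
    split; [split; [apply Rmin_pos; lra| lra]| lra]. }
  set (E := Rabs (ln kap)).
  pose proof lnB_pos. pose proof lnA_pos.
  destruct (nat_big (Rabs c * E / (eps * ln B))) as [n2 Hn2].
  destruct (ell_small (Rmin delta 1)) as [n0 Hn0]. { apply Rmin_pos; lra. }
  destruct (H (n0 + n2 + 1)%nat) as [n [Hn Hc]].
  specialize (Hn0 n ltac:(lia)). pose proof (Rmin_l delta 1). pose proof (Rmin_r delta 1).
  pose proof (ell_pos n).
  set (rad := kap * ell n).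
  assert (Hrad : 0 < rad <= ell n) by (unfold rad; split; nra).
  assert (Hrad1 : rad < 1) by lra.
  exists rad. split; [lra|].
  pose proof (ball_ub x rad (pre d n) (Hd n) ltac:(lra) ltac:(rewrite pre_length; unfold rad; nra)).
  pose proof (muBall_pos rad ltac:(lra)).
  assert (Hu : Mx d n <= - ln (muBall A B p q N x rad)).
  { unfold Mx. pose proof (ln_le' _ _ H6 H5). lra. }
  assert (Hv0 : 0 < - ln rad) by (pose proof (ln_lt0 rad ltac:(lra) Hrad1); lra).
  assert (Hv : - ln rad <= Lx n + E).
  { unfold rad, Lx.
    rewrite ln_mult; [|lra| lra].
    pose proof (Rle_abs (- ln kap)) as Q7. rewrite Rabs_Ropp in Q7. unfold E. lra. }
  pose proof (Lx_ge n). pose proof (Mx_nonneg d n).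
  assert (HE : 0 <= E) by apply Rabs_pos.
  assert (HLC : 0 < Lx n + E) by (pose proof (Lx_nonneg n); lra).
  cbv beta; rewrite fr_eq by lra.
  assert (Hr1 : Mx d n / (Lx n + E) <= (- ln (muBall A B p q N x rad)) / (- ln rad)).
  { apply ratio_ge; lra. }
  destruct (Rle_dec c 0) as [Hc'|Hc'].
  - assert (0 <= Mx d n / (Lx n + E)) by (apply div_ge_iff; lra). lra.
  - assert (c - eps < Mx d n / (Lx n + E)); [|lra].
    apply div_gt_iff; auto.
    assert (Q4 : Rabs c * E < eps * (INR n * ln B)).
    { apply (big_helper _ n2); auto. lia. }
    rewrite Rabs_right in Q4 by lra.
    assert (eps * (INR n * ln B) <= eps * Lx n) by (apply Rmult_le_compat_l; lra).
    assert (0 <= eps * E) by (apply Rmult_le_pos; lra).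
    lra.
Qed.

End Addr.
Lemma N_mono i j : (i <= j)%nat -> (N i <= N j)%nat.
Proof. induction 1; auto. pose proof (hNinc m); lia. Qed.
Lemma N_ge i : (i <= N i)%nat.
Proof. induction i; [lia|]. pose proof (hNinc i); lia. Qed.

Lemma typeA_rr k i : (N (2*i) < k <= N (2*i+1))%nat -> r k = A /\ rh k = p.
Proof.
  intros H. unfold rr, rho. destruct (excluded_middle_informative (typeA N k)) as [_|Hn]; auto.
  exfalso; apply Hn; exists i; auto.
Qed.
Lemma typeB_rr k i : (N (2*i+1) < k <= N (2*i+2))%nat -> r k = B /\ rh k = q.
Proof.
  intros H. unfold rr, rho. destruct (excluded_middle_informative (typeA N k)) as [[j Hj]|Hn]; auto.
  exfalso. destruct (le_lt_dec j i).
  - pose proof (N_mono (2*j+1) (2*i+1) ltac:(lia)). lia.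
  - pose proof (N_mono (2*i+2) (2*j) ltac:(lia)). lia.
Qed.
Lemma rr_rho k : (r k = A /\ rh k = p) \/ (r k = B /\ rh k = q).
Proof. unfold rr, rho. destruct (excluded_middle_informative (typeA N k)); auto. Qed.

Lemma ratio_big M : exists i0, forall i, (i0 <= i)%nat -> M * INR (N i) < INR (N (S i)).
Proof.
  destruct (hNratio M) as [i0 H]. exists (S i0). intros i Hi.
  specialize (H i ltac:(lia)).
  assert (0 < INR (N i)). { apply lt_0_INR. pose proof (N_ge i). lia. }
  apply Rmult_lt_compat_r with (r := INR (N i)) in H; auto.
  unfold Rdiv in H. rewrite Rmult_assoc, Rinv_l in H by lra. lra.
Qed.

Section Seq.
Variable Y : nat -> R.
Variable y : nat -> R.
Hypothesis HY0 : Y 0%nat = 0.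
Hypothesis HYS : forall n, Y (S n) = Y n + y n.

Lemma seq_lower c : (forall k, c * ln (r (S k)) <= y k) -> forall n, c * Lx n <= Y n.
Proof.
  intros H n. induction n. rewrite HY0, Lx_0; lra.
  rewrite HYS, Lx_S. specialize (H n). lra.
Qed.
Lemma seq_upper c : (forall k, y k <= c * ln (r (S k))) -> forall n, Y n <= c * Lx n.
Proof.
  intros H n. induction n. rewrite HY0, Lx_0; lra.
  rewrite HYS, Lx_S. specialize (H n). lra.
Qed.

Lemma seq_freq_A c G : 0 <= c -> (forall k, 0 <= y k <= G) ->
  (forall k i, (N (2*i) < S k <= N (2*i+1))%nat -> y k <= c * ln A) ->
  forall eps, 0 < eps -> forall n1, exists n, (n1 <= n)%nat /\ Y n <= (c + eps) * Lx n.
Proof.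
  intros Hc Hy HA eps Heps n1.
  assert (Hcl : forall i n, (n <= N (2*i+1))%nat -> Y n <= c * Lx n + G * INR (Nat.min n (N (2*i)))).
  { intros i n. induction n; intros Hn.
    - rewrite HY0, Lx_0. simpl. lra.
    - rewrite HYS, Lx_S. specialize (IHn ltac:(lia)).
      destruct (le_lt_dec (S n) (N (2*i))) as [Hle|Hlt].
      + rewrite Nat.min_l in * by lia. rewrite S_INR. pose proof (ln_r_bnd (S n)).
        pose proof lnB_pos. destruct (Hy n). nra.
      + rewrite (Nat.min_r (S n)) by lia. rewrite (Nat.min_r n) in IHn by lia.
        destruct (typeA_rr (S n) i ltac:(lia)) as [E _]. rewrite E.
        specialize (HA n i ltac:(lia)). lra. }
  pose proof lnB_pos.
  destruct (ratio_big (G / (eps * ln B))) as [i0 Hi0].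
  set (i := (i0 + n1 + 1)%nat).
  exists (N (2*i+1))%nat. split.
  { pose proof (N_ge (2*i+1)). unfold i in *. lia. }
  specialize (Hcl i (N (2*i+1)) (le_n _)). rewrite Nat.min_r in Hcl by (pose proof (hNinc (2*i)); replace (S (2*i)) with (2*i+1)%nat in * by lia; lia).
  specialize (Hi0 (2*i)%nat ltac:(unfold i; lia)). replace (S (2*i)) with (2*i+1)%nat in Hi0 by lia.
  pose proof (Lx_ge (N (2*i+1))).
  assert (G * INR (N (2*i)) <= eps * Lx (N (2*i+1))); [|lra].
  assert (Hg : G * INR (N (2*i)) <= eps * ln B * INR (N (2*i+1))).
  { apply Rmult_lt_compat_l with (r := eps * ln B) in Hi0; [|nra].
    unfold Rdiv in Hi0. replace (eps * ln B * (G * / (eps * ln B) * INR (N (2 * i))))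
      with (G * INR (N (2*i)) * ((eps * ln B) * / (eps * ln B))) in Hi0 by ring.
    rewrite Rinv_r in Hi0 by nra. lra. }
  assert (eps * (INR (N (2 * i + 1)) * ln B) <= eps * Lx (N (2*i+1))) by (apply Rmult_le_compat_l; lra).
  lra.
Qed.

Lemma seq_freq_B c : 0 <= c -> (forall k, 0 <= y k) ->
  (forall k i, (N (2*i+1) < S k <= N (2*i+2))%nat -> c * ln B <= y k) ->
  forall eps, 0 < eps -> forall n1, exists n, (n1 <= n)%nat /\ (c - eps) * Lx n <= Y n.
Proof.
  intros Hc Hy HB eps Heps n1.
  assert (Hcl : forall i n, (n <= N (2*i+2))%nat -> c * Lx n - c * ln A * INR (Nat.min n (N (2*i+1))) <= Y n).
  { intros i n. induction n; intros Hn.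
    - rewrite HY0, Lx_0. simpl. lra.
    - rewrite HYS, Lx_S. specialize (IHn ltac:(lia)).
      destruct (le_lt_dec (S n) (N (2*i+1))) as [Hle|Hlt].
      + rewrite Nat.min_l in * by lia. rewrite S_INR. pose proof (ln_r_bnd (S n)).
        pose proof (Hy n). assert (c * ln (r (S n)) <= c * ln A) by (apply Rmult_le_compat_l; lra). nra.
      + rewrite (Nat.min_r (S n)) by lia. rewrite (Nat.min_r n) in IHn by lia.
        destruct (typeB_rr (S n) i ltac:(lia)) as [E _]. rewrite E.
        specialize (HB n i ltac:(lia)). lra. }
  pose proof lnB_pos. pose proof lnA_pos.
  destruct (ratio_big (c * ln A / (eps * ln B))) as [i0 Hi0].
  set (i := (i0 + n1 + 1)%nat).
  exists (N (2*i+2))%nat. split.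
  { pose proof (N_ge (2*i+2)). unfold i in *. lia. }
  specialize (Hcl i (N (2*i+2)) (le_n _)). rewrite Nat.min_r in Hcl by (pose proof (hNinc (2*i+1)); replace (S (2*i+1)) with (2*i+2)%nat in * by lia; lia).
  specialize (Hi0 (2*i+1)%nat ltac:(unfold i; lia)). replace (S (2*i+1)) with (2*i+2)%nat in Hi0 by lia.
  pose proof (Lx_ge (N (2*i+2))).
  assert (c * ln A * INR (N (2*i+1)) <= eps * Lx (N (2*i+2))); [|lra].
  assert (Hg : c * ln A * INR (N (2*i+1)) <= eps * ln B * INR (N (2*i+2))).
  { apply Rmult_lt_compat_l with (r := eps * ln B) in Hi0; [|nra].
    unfold Rdiv in Hi0. replace (eps * ln B * (c * ln A * / (eps * ln B) * INR (N (2 * i + 1))))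
      with (c * ln A * INR (N (2*i+1)) * ((eps * ln B) * / (eps * ln B))) in Hi0 by ring.
    rewrite Rinv_r in Hi0 by nra. lra. }
  assert (eps * (INR (N (2 * i + 2)) * ln B) <= eps * Lx (N (2*i+2))) by (apply Rmult_le_compat_l; lra).
  lra.
Qed.
End Seq.
Definition s1 := - ln (1 - p) / ln A.
Definition s2 := - ln p / ln A.
Definition s3 := - ln (1 - q) / ln B.
Definition s4 := - ln q / ln B.

Lemma lnp_facts : 0 < - ln (1 - p) <= - ln p /\ 0 < - ln (1 - q) <= - ln q.
Proof.
  pose proof (ln_lt0 (1-p) ltac:(lra) ltac:(lra)). pose proof (ln_lt0 (1-q) ltac:(lra) ltac:(lra)).
  pose proof (ln_le' p (1-p) ltac:(lra) ltac:(lra)). pose proof (ln_le' q (1-q) ltac:(lra) ltac:(lra)).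
  lra.
Qed.

Lemma s_order : 0 < s1 /\ s1 <= s2 /\ s2 < s3 /\ s3 <= s4.
Proof.
  pose proof lnp_facts. pose proof lnA_pos. pose proof lnB_pos.
  unfold s1, s2, s3, s4. unfold Rdiv. split; [|split; [|split]].
  - apply Rmult_lt_0_compat; [lra| apply Rinv_0_lt_compat; lra].
  - apply Rmult_le_compat_r; [left; apply Rinv_0_lt_compat|]; lra.
  - exact hexp.
  - apply Rmult_le_compat_r; [left; apply Rinv_0_lt_compat|]; lra.
Qed.

Lemma s_mul_A c : c / ln A * ln A = c.
Proof. pose proof lnA_pos. field. lra. Qed.
Lemma s_mul_B c : c / ln B * ln B = c.
Proof. pose proof lnB_pos. field. lra. Qed.

Lemma ystep_bnd d k : - ln (1 - rh (S k)) <= - ln (mfac d k) <= - ln (rh (S k)).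
Proof.
  pose proof (rho_pos (S k)); pose proof (rho_le (S k)).
  assert (rh (S k) <= mfac d k <= 1 - rh (S k)) by (unfold mfac; destruct (d k); lra).
  pose proof (ln_le' _ _ H (proj1 H1)). pose proof (ln_le' (mfac d k) (1 - rh (S k)) ltac:(lra) ltac:(lra)).
  lra.
Qed.

Section Part1.
Variable x : R.
Variable d : nat -> bool.
Hypothesis Hd : forall n, inI A B N (pre d n) x.

Let yv k := - ln (mfac d k).
Lemma Mx_step : forall n, Mx d (S n) = Mx d n + yv n.
Proof. intros n; rewrite Mx_S; unfold yv; ring. Qed.

Lemma y_lower k : s1 * ln (r (S k)) <= yv k.
Proof.
  pose proof (ystep_bnd d k). pose proof s_order. pose proof lnp_facts. pose proof lnB_pos.
  unfold yv. destruct (rr_rho (S k)) as [[E1 E2]|[E1 E2]]; rewrite E1; rewrite E2 in H.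
  - unfold s1. rewrite s_mul_A. lra.
  - assert (s1 * ln B <= s3 * ln B) by (apply Rmult_le_compat_r; lra).
    unfold s3 in H3. rewrite s_mul_B in H3. lra.
Qed.
Lemma y_upper k : yv k <= s4 * ln (r (S k)).
Proof.
  pose proof (ystep_bnd d k). pose proof s_order. pose proof lnp_facts. pose proof lnA_pos.
  unfold yv. destruct (rr_rho (S k)) as [[E1 E2]|[E1 E2]]; rewrite E1; rewrite E2 in H.
  - assert (s2 * ln A <= s4 * ln A) by (apply Rmult_le_compat_r; lra).
    unfold s2 in H3. rewrite s_mul_A in H3. lra.
  - unfold s4. rewrite s_mul_B. lra.
Qed.
Lemma y_bnd k : 0 <= yv k <= Gm.
Proof. unfold yv. destruct (mstep_bnd d k). lra. Qed.
Lemma y_A k i : (N (2*i) < S k <= N (2*i+1))%nat -> yv k <= s2 * ln A.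
Proof.
  intros H. destruct (typeA_rr (S k) i H) as [_ E]. pose proof (ystep_bnd d k).
  rewrite E in H0. unfold s2; rewrite s_mul_A. unfold yv; lra.
Qed.
Lemma y_B k i : (N (2*i+1) < S k <= N (2*i+2))%nat -> s3 * ln B <= yv k.
Proof.
  intros H. destruct (typeB_rr (S k) i H) as [_ E]. pose proof (ystep_bnd d k).
  rewrite E in H0. unfold s3; rewrite s_mul_B. unfold yv; lra.
Qed.

Lemma lower_bounds dl : lower_ldim A B p q N x dl -> s1 <= dl <= s2.
Proof.
  intros H. unfold lower_ldim in H. pose proof s_order. split.
  - apply (liminf_ge _ _ _ H). apply (transfer_A x d Hd). exists 0%nat. intros n _.
    apply (seq_lower (Mx d) yv (Mx_0 d) Mx_step). apply y_lower.
  - apply (liminf_le _ _ _ H). intros eps Heps delta Hdel.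
    destruct (transfer_B x d Hd (s2 + eps/2)) with (delta := delta) as [rad [Hr Hf]]; auto.
    + intros n1. apply (seq_freq_A (Mx d) yv (Mx_0 d) Mx_step s2 Gm); try lra.
      apply y_bnd. apply y_A.
    + exists rad; split; auto; lra.
Qed.

Lemma upper_bounds du : upper_ldim A B p q N x du -> s3 <= du <= s4.
Proof.
  intros H. unfold upper_ldim in H. pose proof s_order. split.
  - apply (limsup_ge _ _ _ H). intros eps Heps delta Hdel.
    destruct (transfer_D x d Hd (s3 - eps/2)) with (eps := eps/2) (delta := delta) as [rad [Hr Hf]]; try lra.
    + intros n1. apply (seq_freq_B (Mx d) yv (Mx_0 d) Mx_step s3); try lra.
      intros k; apply y_bnd. apply y_B.
    + exists rad; split; auto; lra.
  - apply (limsup_le _ _ _ H). apply (transfer_C x d Hd). exists 0%nat. intros n _.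
    apply (seq_upper (Mx d) yv (Mx_0 d) Mx_step). apply y_upper.
Qed.

Lemma lower_exists : exists dl, lower_ldim A B p q N x dl.
Proof.
  apply liminf_exists.
  - exists 0. exists 1. split; [lra|]. intros rad Hr. apply (fr_nonneg x d Hd); auto.
  - exists s4. intros delta Hdel. apply (transfer_B x d Hd s4); auto.
    intros n1. exists n1. split; auto. apply (seq_upper (Mx d) yv (Mx_0 d) Mx_step). apply y_upper.
Qed.

Lemma upper_exists : exists du, upper_ldim A B p q N x du.
Proof.
  destruct (liminf_exists (fun rad => - (ln (muBall A B p q N x rad) / ln rad))) as [e He].
  - destruct (transfer_C x d Hd s4) with (eps := 1) as [delta [Hdel Hf]]; [|lra|].
    + exists 0%nat. intros n _. apply (seq_upper (Mx d) yv (Mx_0 d) Mx_step). apply y_upper.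
    + exists (- (s4 + 1)). exists delta. split; auto. intros rad Hr. specialize (Hf rad Hr). simpl in Hf. lra.
  - exists 0. intros delta Hdel. exists (Rmin delta 1 / 2).
    pose proof (Rmin_l delta 1). pose proof (Rmin_r delta 1). pose proof (Rmin_pos delta 1 Hdel ltac:(lra)).
    split; [lra|]. pose proof (fr_nonneg x d Hd (Rmin delta 1 / 2) ltac:(lra)). simpl in H2. lra.
  - exists (- e). unfold upper_ldim. apply (limsup_of_liminf (fun rad => ln (muBall A B p q N x rad) / ln rad)). exact He.
Qed.

End Part1.

Lemma part1 x : inX A B N x ->
     exists dl du, lower_ldim A B p q N x dl /\ upper_ldim A B p q N x du /\
       - ln (1 - p) / ln A <= dl <= - ln p / ln A /\
       - ln (1 - q) / ln B <= du <= - ln q / ln B.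
Proof.
  intros HX. destruct (address x HX) as [d Hd].
  destruct (lower_exists x d Hd) as [dl Hdl]. destruct (upper_exists x d Hd) as [du Hdu].
  exists dl, du. split; auto. split; auto. split.
  - exact (lower_bounds x d Hd dl Hdl).
  - exact (upper_bounds x d Hd du Hdu).
Qed.

Lemma part2 x : inX A B N x -> forall dl du,
     lower_ldim A B p q N x dl -> upper_ldim A B p q N x du -> dl < du.
Proof.
  intros HX dl du H1 H2. destruct (address x HX) as [d Hd].
  pose proof (lower_bounds x d Hd dl H1). pose proof (upper_bounds x d Hd du H2).
  pose proof s_order. lra.
Qed.
Lemma nested_prefix (sq : nat -> list bool) : (forall i, exists v, sq (S i) = sq i ++ v) ->
  forall i j, (i <= j)%nat -> exists v, sq j = sq i ++ v.
Proof.
  intros H i j Hij. induction Hij. exists nil; rewrite app_nil_r; auto.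
  destruct IHHij as [v Hv]. destruct (H m) as [v' Hv']. exists (v ++ v').
  rewrite Hv', Hv, app_assoc; auto.
Qed.

Lemma leftI_le1 w : leftI A B N w <= 1.
Proof. unfold leftI. destruct (leftI_bnd w 0). pose proof (ell_pos (0 + length w)). simpl in *. lra. Qed.

Lemma nested_point (sq : nat -> list bool) : (forall i, exists v, sq (S i) = sq i ++ v) ->
  exists x, forall i, inI A B N (sq i) x.
Proof.
  intros H. destruct (completeness (fun y => exists i, y = leftI A B N (sq i))) as [x [Hx1 Hx2]].
  - exists 1. intros y [i ->]. apply leftI_le1.
  - exists (leftI A B N (sq 0%nat)); eauto.
  - exists x. intros i. split.
    + apply Hx1; eauto.
    + apply Hx2. intros y [j ->]. destruct (le_lt_dec j i) as [Hji|Hij].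
      * destruct (nested_prefix sq H j i Hji) as [v Hv]. rewrite Hv.
        destruct (inI_sub (sq j) v). pose proof (ell_pos (length (sq j ++ v))). lra.
      * destruct (nested_prefix sq H i j ltac:(lia)) as [v Hv]. rewrite Hv.
        destruct (inI_sub (sq i) v). pose proof (ell_pos (length (sq i ++ v))). lra.
Qed.

Lemma pre_nested d : forall i, exists v, pre d (S i) = pre d i ++ v.
Proof. intros i; exists (d i :: nil); reflexivity. Qed.

Lemma inX_of_nested (sq : nat -> list bool) x : (forall i, (i <= length (sq i))%nat) ->
  (forall i, inI A B N (sq i) x) -> inX A B N x.
Proof.
  intros Hl Hx n _. exists (firstn n (sq n)). split.
  - rewrite firstn_length. specialize (Hl n). lia.
  - apply (inI_app _ (skipn n (sq n))). rewrite firstn_skipn. auto.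
Qed.

Lemma Lx_A_lower i n : (n <= N (2*i+1))%nat -> ln A * (INR n - INR (N (2*i))) <= Lx n.
Proof.
  pose proof lnA_pos. induction n; intros Hn.
  - rewrite Lx_0. change (INR 0) with 0. pose proof (pos_INR (N (2*i))). nra.
  - destruct (le_lt_dec (S n) (N (2*i))) as [Hle|Hlt].
    + pose proof (Lx_nonneg (S n)). apply le_INR in Hle. nra.
    + rewrite Lx_S. destruct (typeA_rr (S n) i ltac:(lia)) as [E _]. rewrite E, S_INR.
      specialize (IHn ltac:(lia)). lra.
Qed.

Lemma exp_Lx n s : 2 ^ n * Rpower (ell n) s = exp (INR n * ln 2 - s * Lx n).
Proof.
  rewrite pow2_exp. unfold Rpower, Lx. rewrite <- exp_plus. f_equal. ring.
Qed.

Lemma Hzero_upper s : ln 2 / ln A < s -> Hzero s (inX A B N).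
Proof.
  intros Hs delta eps Hdel Heps.
  pose proof lnA_pos. pose proof lnB_pos.
  assert (Hln2 : 0 < ln 2) by (apply ln_gt0; lra).
  assert (Hs0 : 0 < s). { assert (0 < ln 2 / ln A) by (apply Rdiv_lt_0_compat; lra). lra. }
  set (kap := s * ln A - ln 2).
  assert (Hkap : 0 < kap).
  { unfold kap. apply Rmult_lt_compat_r with (r := ln A) in Hs; auto.
    unfold Rdiv in Hs. rewrite Rmult_assoc, Rinv_l, Rmult_1_r in Hs; lra. }
  destruct (ratio_big (2 * s * ln A / kap)) as [i0 Hi0].
  destruct (ell_small delta Hdel) as [nd Hnd].
  destruct (nat_big (- 2 * ln eps / kap)) as [ne Hne].
  set (i := (i0 + nd + ne + 1)%nat).
  set (n := N (2*i+1)).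
  assert (Hn : (2*i+1 <= n)%nat) by apply N_ge.
  assert (Hin : (N (2*i) <= n)%nat) by (apply N_mono; lia).
  specialize (Hi0 (2*i)%nat ltac:(unfold i; lia)). replace (S (2*i)) with (2*i+1)%nat in Hi0 by lia.
  fold n in Hi0.
  assert (Hbound : 2 ^ n * Rpower (ell n) s <= eps).
  { rewrite exp_Lx. rewrite <- (exp_ln eps Heps). apply exp_le'.
    pose proof (Lx_A_lower i n (le_n _)).
    assert (s * (ln A * (INR n - INR (N (2 * i)))) <= s * Lx n) by (apply Rmult_le_compat_l; lra).
    assert (2 * s * ln A * INR (N (2*i)) <= kap * INR n).
    { apply Rmult_lt_compat_r with (r := kap) in Hi0; auto.
      unfold Rdiv in Hi0. replace (2 * s * ln A * / kap * INR (N (2 * i)) * kap) with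
        (2 * s * ln A * INR (N (2 * i)) * (kap * / kap)) in Hi0 by ring.
      rewrite Rinv_r in Hi0 by lra. lra. }
    assert (- 2 * ln eps < kap * INR n).
    { assert (INR ne <= INR n) by (apply le_INR; unfold i in Hn; lia).
      assert (- 2 * ln eps / kap < INR n) by lra.
      apply Rmult_lt_compat_r with (r := kap) in H5; auto. unfold Rdiv in H5.
      rewrite Rmult_assoc, Rinv_l, Rmult_1_r in H5 by lra. lra. }
    unfold kap in *. nra. }
  assert (Hell : ell n < delta) by (apply Hnd; unfold i in Hn; lia).
  pose proof (ell_pos n).
  exists (fun j => if (j <? 2^n)%nat then leftI A B N (nth j (words n) nil) else 0).
  exists (fun j => if (j <? 2^n)%nat then leftI A B N (nth j (words n) nil) + ell n else 0).
  split; [split|].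
  - intros j. destruct (j <? 2^n)%nat; lra.
  - intros y Hy. destruct (Hy n ltac:(lia)) as [w [Hw Hyw]].
    pose proof (words_In n w Hw). destruct (In_nth _ _ nil H2) as [j [Hj Hnth]].
    rewrite words_len in Hj. exists j. apply Nat.ltb_lt in Hj. rewrite Hj, Hnth.
    unfold inI in Hyw. rewrite Hw in Hyw. lra.
  - intros m. eapply Rle_trans; [apply (fsum_trunc _ (2^n) (Rpower (ell n) s))|].
    + intros j. destruct (j <? 2^n)%nat.
      * replace (leftI A B N (nth j (words n) nil) + ell n - leftI A B N (nth j (words n) nil)) with (ell n) by ring.
        rewrite pw_pos by lra. split; [left; apply Rpower_pos| lra].
      * replace (0 - 0) with 0 by ring. rewrite pw_zero by lra. split; [lra| left; apply Rpower_pos].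
    + intros j Hj. assert ((j <? 2^n)%nat = false) by (apply Nat.ltb_ge; auto). rewrite H2.
      replace (0 - 0) with 0 by ring. apply pw_zero; lra.
    + rewrite pow_INR. replace (INR 2) with 2 by (simpl; lra). lra.
Qed.
Lemma at_most_one u v k w1 w2 y1 y2 : v - u < (B-2) * ell k -> length w1 = k -> length w2 = k ->
  inI A B N w1 y1 -> inI A B N w2 y2 -> u < y1 < v -> u < y2 < v -> w1 = w2.
Proof.
  intros HL H1 H2 Hy1 Hy2 Hu1 Hu2. destruct (list_eq_dec Bool.bool_dec w1 w2) as [|Hne]; auto. exfalso.
  unfold inI, leftI in *. rewrite H1 in Hy1; rewrite H2 in Hy2.
  pose proof (ell_pos k).
  destruct (gap_lemma w1 k w2 0 H1 H2 Hne) as [G|G]; simpl in G; nra.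
Qed.

Lemma SW_atmost_one k g c : (forall w w', length w = k -> length w' = k -> g w <> 0 -> g w' <> 0 -> w = w') ->
  (forall w, length w = k -> 0 <= g w <= c) -> SW k g <= c.
Proof.
  intros H1 H2. destruct (classic (exists w0, length w0 = k /\ g w0 <> 0)) as [[w0 [Hl Hg]]|Hn].
  - rewrite (SW_single _ _ w0); auto. apply H2; auto.
    intros w Hw Hne. destruct (Req_dec (g w) 0); auto. exfalso; apply Hne; apply H1; auto.
  - rewrite (SW_ext _ _ (fun _ => 0)).
    + rewrite SW_const. assert (Hk : length (repeat false k) = k) by apply repeat_length.
      destruct (H2 _ Hk). lra.
    + intros w Hw. destruct (Req_dec (g w) 0); auto. exfalso; apply Hn; eauto.
Qed.

Definition ind m u v w := if Rlt_dec u (leftI A B N w) then if Rlt_dec (leftI A B N w + ell m) v then 1 else 0 else 0.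

Lemma ind_01 m u v w : ind m u v w = 0 \/ ind m u v w = 1.
Proof. unfold ind. destruct (Rlt_dec _ _); [destruct (Rlt_dec _ _)|]; auto. Qed.
Lemma ind_bnd m u v w : 0 <= ind m u v w <= 1.
Proof. destruct (ind_01 m u v w) as [E|E]; rewrite E; lra. Qed.
Lemma ind_one m u v w : ind m u v w <> 0 -> u < leftI A B N w /\ leftI A B N w + ell m < v.
Proof. unfold ind. destruct (Rlt_dec _ _); [destruct (Rlt_dec _ _)|]; intros H; try lra; auto. Qed.

Lemma SW_zero_inv k g : (forall w, length w = k -> 0 <= g w) -> SW k g <> 0 -> exists w, length w = k /\ g w <> 0.
Proof.
  intros Hg H. destruct (classic (exists w, length w = k /\ g w <> 0)) as [E|Hn]; auto. exfalso; apply H.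
  rewrite (SW_ext _ _ (fun _ => 0)). rewrite SW_const; ring.
  intros w Hw. destruct (Req_dec (g w) 0); auto. exfalso; apply Hn; eauto.
Qed.

Lemma two_pow_inv k : 2 ^ k * (/ 2) ^ k = 1.
Proof. rewrite <- Rpow_mult_distr, Rinv_r, pow1; lra. Qed.

Lemma Rpower_invA_ge s : 0 <= s -> s * ln A <= ln 2 -> / 2 <= Rpower (/ A) s.
Proof.
  intros Hs H. unfold Rpower. rewrite ln_Rinv by lra.
  replace (/2) with (exp (- ln 2)). apply exp_le'. lra.
  rewrite exp_Ropp, exp_ln; lra.
Qed.

Lemma ell_Rpower_ge s n : 0 <= s -> s * ln A <= ln 2 -> (/2) ^ n <= Rpower (ell n) s.
Proof.
  intros Hs H. eapply Rle_trans; [| apply Rpower_le_base; [auto| split; [|apply ell_ge_pow]]].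
  - rewrite Rpower_pow_base by (apply Rinv_0_lt_compat; lra). apply pow_incr.
    split; [lra| apply Rpower_invA_ge; auto].
  - apply pow_lt. apply Rinv_0_lt_compat; lra.
Qed.

Definition Cst s := 2 * Rpower (/ (B - 2)) s + 1.

Lemma Cst_prop s : 0 <= s -> 1 <= Cst s /\ 2 <= Cst s * Rpower (B - 2) s.
Proof.
  intros Hs. unfold Cst. pose proof (Rpower_pos (/(B-2)) s). pose proof (Rpower_pos (B-2) s).
  assert (E : Rpower (/ (B-2)) s * Rpower (B-2) s = 1).
  { rewrite <- Rpower_mul by (try apply Rinv_0_lt_compat; lra). rewrite Rinv_l by lra.
    unfold Rpower; rewrite ln_1, Rmult_0_r, exp_0; auto. }
  split; nra.
Qed.

Lemma count_lemma s u v m : 0 <= s -> s * ln A <= ln 2 -> u < v ->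
  SW m (ind m u v) <= Cst s * 2 ^ m * Rpower (v - u) s.
Proof.
  intros Hs Hsl Huv. destruct (Cst_prop s Hs) as [C1 C2].
  pose proof (Rpower_pos (v-u) s). pose proof (pow_lt 2 m ltac:(lra)).
  assert (Hle1 : SW m (ind m u v) <= 2 ^ m).
  { rewrite <- (Rmult_1_l (2^m)), <- SW_const. apply SW_le. intros; apply ind_bnd. }
  destruct (Rle_dec (B-2) (v-u)) as [HL|HL].
  - assert (Rpower (B-2) s <= Rpower (v-u) s) by (apply Rpower_le_base; lra).
    assert (1 <= Cst s * Rpower (v - u) s) by nra. nra.
  - destruct (index_exists (v-u)) as [k [Hk1 Hk2]]; [lra|].
    destruct (le_lt_dec k m) as [Hkm|Hkm].
    + replace m with (k + (m - k))%nat at 1 by lia. rewrite SW_app.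
      assert (Hsw : SW k (fun w => SW (m - k) (fun v0 => ind m u v (w ++ v0))) <= 2 ^ (m - k)).
      { apply SW_atmost_one.
        - intros w w' Hw Hw' Hg Hg'.
          apply SW_zero_inv in Hg; [|intros; apply ind_bnd]. apply SW_zero_inv in Hg'; [|intros; apply ind_bnd].
          destruct Hg as [z [Hz Hgz]]. destruct Hg' as [z' [Hz' Hgz']].
          apply ind_one in Hgz. apply ind_one in Hgz'.
          apply (at_most_one u v k w w' (leftI A B N (w ++ z)) (leftI A B N (w' ++ z'))); auto.
          + destruct (inI_sub w z). unfold inI. rewrite length_app, Hw, Hz in *.
            replace (k + (m - k))%nat with m in * by lia. pose proof (ell_pos m). lra.
          + destruct (inI_sub w' z'). unfold inI. rewrite length_app, Hw', Hz' in *.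
            replace (k + (m - k))%nat with m in * by lia. pose proof (ell_pos m). lra.
          + pose proof (ell_pos m). lra.
          + pose proof (ell_pos m). lra.
        - intros w Hw. split. apply SW_ge0; intros; apply ind_bnd.
          rewrite <- (Rmult_1_l (2^(m-k))), <- SW_const. apply SW_le. intros; apply ind_bnd. }
      eapply Rle_trans; [exact Hsw|].
      assert (HL2 : Rpower (B-2) s * (/2) ^ (S k) <= Rpower (v - u) s).
      { eapply Rle_trans; [| apply Rpower_le_base; [auto| split; [|exact Hk1]]].
        - rewrite Rpower_mul by (try apply ell_pos; lra). apply Rmult_le_compat_l.
          left; apply Rpower_pos. apply ell_Rpower_ge; auto.
        - pose proof (ell_pos (S k)). nra. }
      assert (E1 : 2 ^ m = 2 ^ (m - k) * 2 ^ k) by (rewrite <- pow_add; f_equal; lia).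
      rewrite E1. pose proof (two_pow_inv k). pose proof (pow_lt 2 (m-k) ltac:(lra)).
      pose proof (pow_lt 2 k ltac:(lra)). simpl pow in HL2.
      assert (1 <= Cst s * 2 ^ k * Rpower (v - u) s).
      { assert (Q5 : Cst s * 2 ^ k * (Rpower (B - 2) s * (/ 2 * (/ 2) ^ k)) <= Cst s * 2 ^ k * Rpower (v - u) s).
        { apply Rmult_le_compat_l; auto. pose proof (Rpower_pos (B-2) s). nra. }
        replace (Cst s * 2 ^ k * (Rpower (B - 2) s * (/ 2 * (/ 2) ^ k))) with
          ((Cst s * Rpower (B - 2) s) * / 2 * (2 ^ k * (/ 2) ^ k)) in Q5 by ring.
        rewrite two_pow_inv in Q5. lra. }
      nra.
    + assert (Hsw : SW m (ind m u v) <= 1).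
      { apply SW_atmost_one.
        - intros w w' Hw Hw' Hg Hg'. apply ind_one in Hg. apply ind_one in Hg'.
          assert (ell k <= ell m) by (apply ell_mono; lia).
          apply (at_most_one u v m w w' (leftI A B N w) (leftI A B N w')); auto.
          + nra.
          + unfold inI; rewrite Hw; pose proof (ell_pos m); lra.
          + unfold inI; rewrite Hw'; pose proof (ell_pos m); lra.
          + pose proof (ell_pos m); lra.
          + pose proof (ell_pos m); lra.
        - intros; apply ind_bnd. }
      destruct (Req_dec (SW m (ind m u v)) 0) as [E|E]; [rewrite E; apply Rmult_le_pos; [apply Rmult_le_pos|]; lra|].
      apply SW_zero_inv in E; [|intros; apply ind_bnd]. destruct E as [w [Hw Hg]]. apply ind_one in Hg.
      assert (ell m <= v - u) by lra.
      assert (Rpower (ell m) s <= Rpower (v - u) s) by (apply Rpower_le_base; [auto| split; [apply ell_pos| auto]]).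
      pose proof (ell_Rpower_ge s m Hs Hsl). pose proof (two_pow_inv m).
      assert (1 <= 2 ^ m * Rpower (v - u) s).
      { assert (2 ^ m * (/2)^m <= 2 ^ m * Rpower (v - u) s) by (apply Rmult_le_compat_l; lra). lra. }
      assert (0 <= (Cst s - 1) * (2 ^ m * Rpower (v - u) s)) by (apply Rmult_le_pos; lra).
      nra.
Qed.

Section Compact.
Variables al be : nat -> R.
Hypothesis Hcov : forall x, inX A B N x -> exists i, al i < x < be i.

Definition good w := exists m K, (length w <= m)%nat /\ forall v, length (w ++ v) = m ->
  exists i, (i < K)%nat /\ al i < leftI A B N (w ++ v) /\ leftI A B N (w ++ v) + ell m < be i.

Lemma good_split w : good (w ++ false :: nil) -> good (w ++ true :: nil) -> good w.
Proof.
  intros [m1 [K1 [Hl1 H1]]] [m2 [K2 [Hl2 H2]]].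
  rewrite length_app in Hl1, Hl2. simpl in Hl1, Hl2.
  exists (Nat.max m1 m2), (Nat.max K1 K2). split; [lia|].
  intros v Hv. rewrite length_app in Hv.
  destruct v as [|b v']; [simpl in Hv; lia|].
  assert (Hgen : forall mb Kb, (length w + 1 <= mb)%nat -> (mb <= Nat.max m1 m2)%nat -> (Kb <= Nat.max K1 K2)%nat ->
     (forall v, length ((w ++ b :: nil) ++ v) = mb -> exists i, (i < Kb)%nat /\ al i < leftI A B N ((w ++ b :: nil) ++ v) /\
        leftI A B N ((w ++ b :: nil) ++ v) + ell mb < be i) ->
     exists i, (i < Nat.max K1 K2)%nat /\ al i < leftI A B N (w ++ b :: v') /\ leftI A B N (w ++ b :: v') + ell (Nat.max m1 m2) < be i).
  { intros mb Kb Hmb1 Hmb2 HKb Hb.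
    set (t := (mb - (length w + 1))%nat).
    destruct (Hb (firstn t v')) as [i [Hi [Hi1 Hi2]]].
    { rewrite !length_app, firstn_length. simpl in Hv. simpl. lia. }
    exists i. split; [lia|].
    assert (E : w ++ b :: v' = ((w ++ b :: nil) ++ firstn t v') ++ skipn t v').
    { rewrite <- app_assoc, firstn_skipn, <- app_assoc. reflexivity. }
    rewrite E. destruct (inI_sub ((w ++ b :: nil) ++ firstn t v') (skipn t v')) as [S1 S2].
    rewrite <- E in S2 at 2. rewrite length_app in S2. simpl in Hv.
    replace (length w + length (b :: v'))%nat with (Nat.max m1 m2) in S2 by (simpl; lia).
    assert (Hlen : length ((w ++ b :: nil) ++ firstn t v') = mb).
    { rewrite !length_app, firstn_length. simpl. lia. }
    rewrite Hlen in S2. rewrite <- E in S1, S2 |- *. split; lra. }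
  destruct b.
  - apply (Hgen m2 K2); auto; lia.
  - apply (Hgen m1 K1); auto; lia.
Qed.

Fixpoint sqc (n : nat) : list bool :=
  match n with
  | O => nil
  | S k => if excluded_middle_informative (good (sqc k ++ false :: nil)) then sqc k ++ true :: nil else sqc k ++ false :: nil
  end.

Lemma compact_cover : exists m K, forall w, length w = m -> exists i, (i < K)%nat /\ al i < leftI A B N w /\ leftI A B N w + ell m < be i.
Proof.
  destruct (classic (good nil)) as [[m [K [_ H]]]|Hbad].
  - exists m, K. intros w Hw. apply (H w); auto.
  - assert (Hsq : forall n, ~ good (sqc n)).
    { induction n; simpl; auto. destruct (excluded_middle_informative _) as [G|G]; auto.
      intros G'. apply IHn. apply good_split; auto. }
    assert (Hnest : forall i, exists v, sqc (S i) = sqc i ++ v).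
    { intros i; simpl. destruct (excluded_middle_informative _); eauto. }
    assert (Hlen : forall n, length (sqc n) = n).
    { induction n; simpl; auto. destruct (excluded_middle_informative _); rewrite length_app, IHn; simpl; lia. }
    destruct (nested_point sqc Hnest) as [x Hx].
    assert (HX : inX A B N x) by (apply (inX_of_nested sqc); auto; intros; rewrite Hlen; lia).
    destruct (Hcov x HX) as [i [Hi1 Hi2]].
    destruct (ell_small (Rmin (x - al i) (be i - x))) as [n Hn]. { apply Rmin_pos; lra. }
    specialize (Hn n (le_n n)). pose proof (Rmin_l (x - al i) (be i - x)). pose proof (Rmin_r (x - al i) (be i - x)).
    exfalso; apply (Hsq n). exists n, (S i). split; [rewrite Hlen; lia|].
    intros v Hv. rewrite length_app, Hlen in Hv. destruct v; [|simpl in Hv; lia].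
    rewrite app_nil_r. exists i. split; [lia|]. specialize (Hx n). unfold inI in Hx. rewrite Hlen in Hx. lra.
Qed.
End Compact.

Lemma SW_fsum m g K : SW m (fun w => fsum (fun i => g i w) K) = fsum (fun i => SW m (g i)) K.
Proof.
  induction K.
  - simpl. rewrite SW_const. ring.
  - simpl. rewrite SW_plus, IHK. reflexivity.
Qed.
Lemma fsum_ge_term f K i : (forall j, (j < K)%nat -> 0 <= f j) -> (i < K)%nat -> f i <= fsum f K.
Proof.
  induction K; intros H Hi; [lia|]. simpl.
  destruct (Nat.eq_dec i K) as [->|Hne].
  - pose proof (fsum_nonneg f K ltac:(intros; apply H; lia)). lra.
  - pose proof (IHK ltac:(intros; apply H; lia) ltac:(lia)). pose proof (H K ltac:(lia)). lra.
Qed.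

Lemma Hzero_lower s : 0 <= s -> s < ln 2 / ln A -> ~ Hzero s (inX A B N).
Proof.
  intros Hs Hs2 HZ. pose proof lnA_pos.
  assert (Hsl : s * ln A <= ln 2).
  { apply Rmult_lt_compat_r with (r := ln A) in Hs2; auto. unfold Rdiv in Hs2.
    rewrite Rmult_assoc, Rinv_l, Rmult_1_r in Hs2; lra. }
  destruct (Req_dec s 0) as [Hs0|Hs0].
  - subst s. destruct (HZ 1 (1/2) ltac:(lra) ltac:(lra)) as [a [b [_ Hsum]]].
    specialize (Hsum 1%nat). simpl in Hsum. rewrite pw_s0 in Hsum. lra.
  - assert (Hsp : 0 < s) by lra.
    destruct (Cst_prop s Hs) as [C1 C2].
    set (T3 := Rpower 3 s). assert (HT3 : 0 < T3) by apply Rpower_pos.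
    set (eps0 := / (4 * Cst s * T3)).
    assert (He0 : 0 < eps0) by (unfold eps0; apply Rinv_0_lt_compat; nra).
    destruct (HZ 1 eps0 ltac:(lra) He0) as [a [b [[Hab Hcov] Hsum]]].
    set (tau := fun i : nat => Rpower (eps0 / 2 ^ (S i)) (/ s)).
    assert (Htau : forall i, 0 < tau i /\ Rpower (tau i) s = eps0 / 2 ^ (S i)).
    { intros i. split; [apply Rpower_pos|]. unfold tau. rewrite Rpower_mult, Rinv_l by lra.
      apply Rpower_1. apply Rdiv_lt_0_compat; auto. apply pow_lt; lra. }
    set (h := fun i => Rmax (b i - a i) (tau i)).
    assert (Hh : forall i, 0 < h i /\ b i - a i <= h i /\ Rpower (h i) s <= pw (b i - a i) s + eps0 / 2 ^ (S i)).
    { intros i. destruct (Htau i) as [T1 T2]. unfold h. unfold Rmax. destruct (Rle_dec (b i - a i) (tau i)).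
      - split; [lra| split; [lra|]]. rewrite T2. pose proof (pw_nonneg (b i - a i) s). lra.
      - split; [lra| split; [lra|]]. rewrite pw_pos by lra. pose proof (Rpower_pos (eps0 / 2 ^ S i) 1).
        assert (0 < eps0 / 2 ^ S i) by (apply Rdiv_lt_0_compat; auto; apply pow_lt; lra). lra. }
    set (al := fun i => a i - h i). set (be := fun i => b i + h i).
    destruct (compact_cover al be) as [m [K HK]].
    { intros x Hx. destruct (Hcov x Hx) as [i Hi]. exists i. unfold al, be. destruct (Hh i). lra. }
    assert (Hcount : 2 ^ m <= fsum (fun i => SW m (ind m (al i) (be i))) K).
    { rewrite <- SW_fsum. rewrite <- (Rmult_1_l (2^m)), <- SW_const. apply SW_le.
      intros w Hw. destruct (HK w Hw) as [i [Hi [H1 H2]]].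
      eapply Rle_trans; [| apply (fsum_ge_term _ K i); auto; intros; apply ind_bnd].
      unfold ind. destruct (Rlt_dec _ _); [destruct (Rlt_dec _ _)|]; lra. }
    assert (Hbnd : fsum (fun i => SW m (ind m (al i) (be i))) K <=
                   fsum (fun i => Cst s * 2 ^ m * T3 * (pw (b i - a i) s + eps0 / 2 ^ (S i))) K).
    { apply fsum_le. intros i Hi. destruct (Hh i) as [h1 [h2 h3]].
      assert (Hlt : al i < be i) by (unfold al, be; destruct (Hab i); lra).
      eapply Rle_trans; [apply (count_lemma s); auto|].
      assert (Rpower (be i - al i) s <= T3 * Rpower (h i) s).
      { unfold T3. rewrite <- Rpower_mul by lra. apply Rpower_le_base; auto. unfold al, be. destruct (Hab i). lra. }
      pose proof (pow_lt 2 m ltac:(lra)).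
      assert (0 <= Cst s * 2 ^ m) by nra.
      replace (Cst s * 2 ^ m * T3 * (pw (b i - a i) s + eps0 / 2 ^ S i)) with (Cst s * 2 ^ m * (T3 * (pw (b i - a i) s + eps0 / 2 ^ S i))) by ring.
      apply Rmult_le_compat_l; [exact H2|].
      assert (T3 * Rpower (h i) s <= T3 * (pw (b i - a i) s + eps0 / 2 ^ S i)) by (apply Rmult_le_compat_l; lra).
      lra. }
    rewrite fsum_scal, fsum_plus, fsum_geom in Hbnd.
    specialize (Hsum K).
    assert (/ 2 ^ K > 0) by (apply Rinv_0_lt_compat, pow_lt; lra).
    assert (0 <= eps0 * / 2 ^ K) by (apply Rmult_le_pos; lra).
    pose proof (pow_lt 2 m ltac:(lra)).
    assert (Cst s * 2 ^ m * T3 * (fsum (fun i => pw (b i - a i) s) K + eps0 * (1 - / 2 ^ K)) <= Cst s * 2 ^ m * T3 * (2 * eps0)).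
    { apply Rmult_le_compat_l; [|lra]. apply Rmult_le_pos; [apply Rmult_le_pos|]; lra. }
    assert (Cst s * 2 ^ m * T3 * (2 * eps0) = 2 ^ m / 2).
    { unfold eps0. field. split; lra. }
    lra.
Qed.
Definition ballind (c rad : R) m v := if Rle_dec (c - rad) (leftI A B N v) then
   if Rle_dec (leftI A B N v + ell m) (c + rad) then 1 else 0 else 0.
Lemma ballind_01 c rad m v : ballind c rad m v = 0 \/ ballind c rad m v = 1.
Proof. unfold ballind. destruct (Rle_dec _ _); [destruct (Rle_dec _ _)|]; auto. Qed.
Lemma ballind_bnd c rad m v : 0 <= ballind c rad m v <= 1.
Proof. destruct (ballind_01 c rad m v) as [E|E]; rewrite E; lra. Qed.

Lemma level_exists rad : 0 < rad < 1 -> exists n, ell (S n) <= rad < ell n.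
Proof.
  intros Hr. destruct (ell_small rad) as [m Hm]; [lra|]. specialize (Hm m (le_n m)).
  apply Rlt_le in Hm. revert Hm. induction m; intros Hm. simpl in Hm; lra.
  destruct (Rlt_dec rad (ell m)) as [H|H]. exists m. split; [exact Hm| exact H]. apply IHm; lra.
Qed.

Lemma cnt_lower c rad d n m : (forall k, inI A B N (pre d k) c) -> ell n <= rad -> (n <= m)%nat ->
  2 ^ (m - n) <= SW m (ballind c rad m).
Proof.
  intros Hd Hr Hnm. set (g := ballind c rad m).
  replace (SW m g) with (SW (n + (m - n)) g) by (f_equal; lia). rewrite SW_app. unfold g.
  eapply Rle_trans; [| apply (SW_ge_one _ _ (pre d n)); [| apply pre_length]].
  - rewrite <- (Rmult_1_l (2 ^ (m - n))), <- SW_const. right. apply SW_ext. intros v Hv.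
    unfold ballind. specialize (Hd n). unfold inI in Hd. rewrite pre_length in Hd.
    destruct (inI_sub (pre d n) v) as [S1 S2]. rewrite length_app, pre_length, Hv in S2.
    replace (n + (m - n))%nat with m in S2 by lia. pose proof (ell_pos m).
    destruct (Rle_dec _ _); [destruct (Rle_dec _ _)|]; lra.
  - intros u Hu. apply SW_ge0. intros; apply ballind_bnd.
Qed.

Lemma P0_upper s : ln 2 / ln B < s -> P0_le s (inX A B N) 0.
Proof.
  intros Hs eta Heta.
  pose proof lnB_pos.
  assert (Hln2 : 0 < ln 2) by (apply ln_gt0; lra).
  assert (Hs0 : 0 < s). { assert (0 < ln 2 / ln B) by (apply Rdiv_lt_0_compat; lra). lra. }
  assert (Hsl : ln 2 < s * ln B).
  { apply Rmult_lt_compat_r with (r := ln B) in Hs; auto. unfold Rdiv in Hs.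
    rewrite Rmult_assoc, Rinv_l, Rmult_1_r in Hs; lra. }
  set (qB := 2 * Rpower (/ B) s).
  assert (HqB : 0 <= qB < 1).
  { unfold qB. pose proof (Rpower_pos (/B) s). split; [lra|].
    unfold Rpower. rewrite ln_Rinv by lra.
    assert (exp (s * - ln B) < exp (- ln 2)) by (apply exp_increasing; lra).
    rewrite exp_Ropp, exp_ln in H1 by lra. lra. }
  pose proof (Rpower_pos 2 s) as HR2.
  destruct (pow_small qB (eta / (2 * Rpower 2 s)) HqB) as [n0 Hn0].
  { apply Rdiv_lt_0_compat; lra. }
  exists (ell n0 / 2). split. { pose proof (ell_pos n0). lra. }
  intros k c rad [Hpk Hdisj]. rewrite Rplus_0_l.
  assert (Hball : forall i, (i < k)%nat -> exists n d, (forall j, inI A B N (pre d j) (c i)) /\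
        ell n <= rad i /\ pw (2 * rad i) s <= eta * (/2) ^ n).
  { intros i Hi. destruct (Hpk i Hi) as [HX [Hr1 Hr2]].
    destruct (address (c i) HX) as [d Hd].
    assert (ell n0 <= 1) by apply ell_le1. pose proof (ell_pos n0).
    destruct (level_exists (rad i)) as [n [Hn1 Hn2]]; [lra|].
    assert (Hnn0 : (n0 <= n)%nat).
    { destruct (le_lt_dec n0 n); auto. pose proof (ell_mono (S n) n0 ltac:(lia)). lra. }
    exists (S n), d. split; auto. split; auto.
    rewrite pw_pos by lra.
    eapply Rle_trans; [apply Rpower_le_base with (y := 2 * (/B) ^ n); [lra| split; [lra|]]|].
    { pose proof (ell_le_pow n). lra. }
    rewrite Rpower_mul, Rpower_pow_base by (try apply pow_lt; try apply Rinv_0_lt_compat; lra).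
    specialize (Hn0 n Hnn0). unfold qB in Hn0. rewrite Rpow_mult_distr in Hn0.
    assert (E : eta * (/2) ^ (S n) = (eta / (2 * Rpower 2 s)) * (/2)^n * Rpower 2 s).
    { simpl. field. lra. }
    rewrite E. pose proof (pow_lt (/2) n ltac:(lra)) as Q3.
    pose proof (two_pow_inv n) as Q4.
    assert (T : 2 ^ n * Rpower (/ B) s ^ n * ((/2)^n * Rpower 2 s) <= eta / (2 * Rpower 2 s) * ((/2)^n * Rpower 2 s)).
    { apply Rmult_le_compat_r; [apply Rmult_le_pos; lra| lra]. }
    replace (2 ^ n * Rpower (/ B) s ^ n * ((/2)^n * Rpower 2 s)) with (Rpower 2 s * Rpower (/ B) s ^ n * (2 ^ n * (/ 2) ^ n)) in T by ring.
    rewrite Q4 in T. lra. }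
  assert (Hind : forall k', (k' <= k)%nat -> exists M, forall m, (M <= m)%nat ->
      fsum (fun i => pw (2 * rad i) s) k' <= eta * (/2) ^ m * fsum (fun i => SW m (ballind (c i) (rad i) m)) k').
  { induction k'; intros Hk'.
    - exists 0%nat. intros m _. simpl. lra.
    - destruct (IHk' ltac:(lia)) as [M HM].
      destruct (Hball k' ltac:(lia)) as [n [d [Hd [Hl Hpw]]]].
      exists (Nat.max M n). intros m Hm. rewrite !fsum_S.
      specialize (HM m ltac:(lia)).
      pose proof (cnt_lower (c k') (rad k') d n m Hd Hl ltac:(lia)).
      assert (E2 : (/2) ^ n = (/2) ^ m * 2 ^ (m - n)).
      { replace m with (n + (m - n))%nat at 1 by lia. rewrite pow_add.
        replace ((/ 2) ^ n * (/ 2) ^ (m - n) * 2 ^ (m - n)) with ((/ 2) ^ n * (2 ^ (m - n) * (/ 2) ^ (m - n))) by ring.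
        rewrite two_pow_inv; ring. }
      assert (eta * (/2) ^ n <= eta * (/2) ^ m * SW m (ballind (c k') (rad k') m)).
      { rewrite E2. rewrite <- Rmult_assoc. apply Rmult_le_compat_l; auto.
        apply Rmult_le_pos; [lra| left; apply pow_lt; lra]. }
      lra. }
  destruct (Hind k (le_n k)) as [M HM]. specialize (HM M (le_n M)).
  eapply Rle_trans; [exact HM|].
  rewrite <- SW_fsum.
  assert (SW M (fun w => fsum (fun i => ballind (c i) (rad i) M w) k) <= 2 ^ M).
  { rewrite <- (Rmult_1_l (2 ^ M)), <- SW_const. apply SW_le. intros v Hv.
    apply fsum_ind_le1.
    - intros; apply ballind_01.
    - intros i j Hi Hj Hij Fi Fj. specialize (Hdisj i j Hi Hj Hij).
      unfold ballind in Fi, Fj.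
      destruct (Rle_dec _ _) in Fi; [destruct (Rle_dec _ _) in Fi|]; try lra.
      destruct (Rle_dec _ _) in Fj; [destruct (Rle_dec _ _) in Fj|]; try lra.
      pose proof (ell_pos M). unfold Rabs in Hdisj. destruct (Rcase_abs _); lra. }
  pose proof (two_pow_inv M). pose proof (pow_lt (/2) M ltac:(lra)).
  assert (eta * (/ 2) ^ M * SW M (fun w => fsum (fun i => ballind (c i) (rad i) M w) k) <= eta * (/2)^M * 2 ^ M).
  { apply Rmult_le_compat_l; auto. apply Rmult_le_pos; lra. }
  replace (eta * (/ 2) ^ M * 2 ^ M) with (eta * (2 ^ M * (/2) ^ M)) in H3 by ring.
  rewrite H1 in H3. lra.
Qed.

Lemma Pzero_upper s : ln 2 / ln B < s -> Pzero s (inX A B N).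
Proof.
  intros Hs eps Heps. exists (fun _ => inX A B N), (fun _ => 0). split; [|split].
  - intros x Hx; exists 0%nat; auto.
  - intros i. apply P0_upper; auto.
  - intros n. rewrite fsum_const. lra.
Qed.
Lemma Lx_B_upper j n : (n <= N (2*j+2))%nat -> Lx n <= ln B * INR n + ln A * INR (Nat.min n (N (2*j+1))).
Proof.
  pose proof lnA_pos. pose proof lnB_pos. induction n; intros Hn.
  - rewrite Lx_0. change (INR 0) with 0. simpl Nat.min. change (INR 0) with 0. lra.
  - rewrite Lx_S. specialize (IHn ltac:(lia)).
    destruct (le_lt_dec (S n) (N (2*j+1))) as [Hle|Hlt].
    + rewrite !Nat.min_l in * by lia. rewrite !S_INR. pose proof (ln_r_bnd (S n)). lra.
    + rewrite (Nat.min_r (S n)) by lia. rewrite (Nat.min_r n) in IHn by lia.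
      destruct (typeB_rr (S n) j ltac:(lia)) as [E _]. rewrite E, S_INR. lra.
Qed.

Lemma big_level s T n1 : 0 <= s -> s < ln 2 / ln B ->
  exists m, (n1 <= m)%nat /\ T < 2 ^ m * Rpower (ell m) s.
Proof.
  intros Hs Hs2. pose proof lnA_pos. pose proof lnB_pos.
  assert (Hln2 : 0 < ln 2) by (apply ln_gt0; lra).
  set (kap := ln 2 - s * ln B).
  assert (Hkap : 0 < kap).
  { unfold kap. apply Rmult_lt_compat_r with (r := ln B) in Hs2; auto. unfold Rdiv in Hs2.
    rewrite Rmult_assoc, Rinv_l, Rmult_1_r in Hs2; lra. }
  destruct (ratio_big (2 * s * ln A / kap)) as [j0 Hj0].
  destruct (nat_big (2 * Rabs T / kap)) as [nT HnT].
  set (j := (j0 + n1 + nT + 1)%nat). set (m := N (2*j+2)).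
  assert (Hm : (2*j+2 <= m)%nat) by apply N_ge.
  exists m. split; [unfold j in Hm; lia|].
  specialize (Hj0 (2*j+1)%nat ltac:(unfold j; lia)). replace (S (2*j+1)) with (2*j+2)%nat in Hj0 by lia. fold m in Hj0.
  rewrite exp_Lx.
  pose proof (Lx_B_upper j m (le_n _)).
  rewrite Nat.min_r in H1 by (apply N_mono; lia).
  assert (s * Lx m <= s * (ln B * INR m + ln A * INR (N (2 * j + 1)))) by (apply Rmult_le_compat_l; lra).
  assert (2 * s * ln A * INR (N (2*j+1)) <= kap * INR m).
  { apply Rmult_lt_compat_r with (r := kap) in Hj0; auto.
    unfold Rdiv in Hj0. replace (2 * s * ln A * / kap * INR (N (2 * j + 1)) * kap) with
      (2 * s * ln A * INR (N (2 * j + 1)) * (kap * / kap)) in Hj0 by ring.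
    rewrite Rinv_r in Hj0 by lra. lra. }
  assert (HTm : 2 * Rabs T < kap * INR m).
  { assert (INR nT <= INR m) by (apply le_INR; unfold j in Hm; lia).
    assert (Q5 : 2 * Rabs T / kap < INR m) by lra.
    apply Rmult_lt_compat_r with (r := kap) in Q5; auto. unfold Rdiv in Q5.
    rewrite Rmult_assoc, Rinv_l, Rmult_1_r in Q5 by lra. lra. }
  pose proof (exp_ineq1_le (kap * INR m / 2)) as Q1.
  assert (Q2 : kap * INR m / 2 <= INR m * ln 2 - s * Lx m) by (unfold kap in *; nra).
  pose proof (exp_le' _ _ Q2). pose proof (Rle_abs T). lra.
Qed.

Lemma escape s F a : 0 <= s -> s < ln 2 / ln B -> P0_le s F a ->
  forall w, exists v, (1 <= length v)%nat /\ forall y, F y -> ~ inI A B N (w ++ v) y.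
Proof.
  intros Hs Hs2 HP w. apply NNPP. intros Hn.
  assert (Hall : forall v, (1 <= length v)%nat -> exists y, F y /\ inI A B N (w ++ v) y).
  { intros v Hv. apply NNPP. intros Hy. apply Hn. exists v. split; auto.
    intros y Fy Iy. apply Hy. eauto. }
  destruct (HP 1 ltac:(lra)) as [delta [Hdel Hpk]].
  set (kap := (B - 2) / 3).
  assert (Hkap : 0 < kap) by (unfold kap; lra).
  set (T := (a + 1) * 2 ^ length w / Rpower (2 * kap) s).
  destruct (ell_small (delta / kap)) as [nd Hnd]. { apply Rdiv_lt_0_compat; lra. }
  destruct (big_level s T (nd + length w + 1) Hs Hs2) as [m [Hm HT]].
  set (K := (2 ^ (m - length w))%nat).
  set (ws := words (m - length w)).
  assert (Hws : forall j, (j < K)%nat -> length (nth j ws nil) = (m - length w)%nat /\ (1 <= m - length w)%nat).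
  { intros j Hj. split; [|lia]. apply words_length. apply nth_In. unfold ws; rewrite words_len. auto. }
  assert (Hex : forall j, exists y, (j < K)%nat -> F y /\ inI A B N (w ++ nth j ws nil) y).
  { intros j. destruct (lt_dec j K) as [Hj|Hj].
    - destruct (Hall (nth j ws nil)) as [y Hy]. rewrite (proj1 (Hws j Hj)). apply (Hws j Hj).
      exists y; auto.
    - exists 0; intros; lia. }
  set (c := fun j => proj1_sig (constructive_indefinite_description _ (Hex j))).
  assert (Hc : forall j, (j < K)%nat -> F (c j) /\ inI A B N (w ++ nth j ws nil) (c j)).
  { intros j Hj. exact (proj2_sig (constructive_indefinite_description _ (Hex j)) Hj). }
  pose proof (ell_pos m).
  assert (Hrad : kap * ell m <= delta).
  { specialize (Hnd m ltac:(lia)). apply Rmult_lt_compat_l with (r := kap) in Hnd; auto.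
    unfold Rdiv in Hnd. rewrite <- Rmult_assoc, (Rmult_comm kap delta), Rmult_assoc, Rinv_r, Rmult_1_r in Hnd; lra. }
  specialize (Hpk K c (fun _ => kap * ell m)).
  assert (Hpack : delta_packing delta F K c (fun _ => kap * ell m)).
  { split.
    - intros j Hj. split; [apply Hc; auto|]. split; [nra| auto].
    - intros j j' Hj Hj' Hjj.
      assert (Hne : nth j ws nil <> nth j' ws nil).
      { intros E. apply Hjj. apply (NoDup_nth ws nil); auto. apply words_NoDup.
        all: unfold ws; rewrite words_len; auto. }
      assert (Hne' : w ++ nth j ws nil <> w ++ nth j' ws nil) by (intros E; apply Hne; eapply app_inv_head; eauto).
      assert (Hl1 : length (w ++ nth j ws nil) = m) by (rewrite length_app, (proj1 (Hws j Hj)); lia).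
      assert (Hl2 : length (w ++ nth j' ws nil) = m) by (rewrite length_app, (proj1 (Hws j' Hj')); lia).
      destruct (Hc j Hj) as [_ I1]. destruct (Hc j' Hj') as [_ I2].
      unfold inI, leftI in I1, I2. rewrite Hl1 in I1. rewrite Hl2 in I2.
      destruct (gap_lemma _ m _ 0 Hl1 Hl2 Hne') as [G|G]; simpl in G;
      unfold Rabs; destruct (Rcase_abs _); unfold kap; nra. }
  specialize (Hpk Hpack). cbv beta in Hpk. rewrite fsum_const in Hpk.
  rewrite pw_pos in Hpk by nra.
  assert (E : INR K = 2 ^ m / 2 ^ length w).
  { unfold K. rewrite pow_INR. replace (INR 2) with 2 by (simpl; lra).
    replace m with (length w + (m - length w))%nat at 2 by lia. rewrite pow_add. field. apply pow_nonzero; lra. }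
  rewrite E in Hpk. replace (2 * (kap * ell m)) with (2 * kap * ell m) in Hpk by ring. rewrite Rpower_mul in Hpk by nra.
  pose proof (Rpower_pos (2 * kap) s). pose proof (pow_lt 2 (length w) ltac:(lra)).
  unfold T in HT.
  assert (2 ^ m * Rpower (ell m) s * Rpower (2 * kap) s / 2 ^ length w <= a + 1).
  { replace (2 ^ m * Rpower (ell m) s * Rpower (2 * kap) s / 2 ^ length w) with (2 ^ m / 2 ^ length w * (Rpower (2 * kap) s * Rpower (ell m) s)) by (field; lra). lra. }
  apply (Rmult_lt_compat_r (Rpower (2 * kap) s / 2 ^ length w)) in HT; [|apply Rdiv_lt_0_compat; lra].
  replace ((a + 1) * 2 ^ length w / Rpower (2 * kap) s * (Rpower (2 * kap) s / 2 ^ length w)) with (a + 1) in HT by (field; lra).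
  replace (2 ^ m * Rpower (ell m) s * (Rpower (2 * kap) s / 2 ^ length w)) with (2 ^ m * Rpower (ell m) s * Rpower (2 * kap) s / 2 ^ length w) in HT by (field; lra).
  lra.
Qed.

Lemma Pzero_lower s : 0 <= s -> s < ln 2 / ln B -> ~ Pzero s (inX A B N).
Proof.
  intros Hs Hs2 HP. destruct (HP 1 ltac:(lra)) as [F [a [Hcov [HF _]]]].
  assert (esc : forall i w, exists v, (1 <= length v)%nat /\ forall y, F i y -> ~ inI A B N (w ++ v) y).
  { intros i. apply (escape s (F i) (a i)); auto. }
  set (sqb := fix sqb (n : nat) : list bool := match n with
         | O => nil
         | S i => sqb i ++ proj1_sig (constructive_indefinite_description _ (esc i (sqb i))) end).
  assert (Hstep : forall i, sqb (S i) = sqb i ++ proj1_sig (constructive_indefinite_description _ (esc i (sqb i)))) by reflexivity.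
  assert (Hnest : forall i, exists v, sqb (S i) = sqb i ++ v) by (intros i; eexists; apply Hstep).
  assert (Hlen : forall i, (i <= length (sqb i))%nat).
  { induction i; [simpl; lia|]. rewrite Hstep, length_app.
    pose proof (proj1 (proj2_sig (constructive_indefinite_description _ (esc i (sqb i))))). lia. }
  destruct (nested_point sqb Hnest) as [x Hx].
  assert (HX : inX A B N x) by (apply (inX_of_nested sqb); auto).
  destruct (Hcov x HX) as [i Hi].
  apply (proj2 (proj2_sig (constructive_indefinite_description _ (esc i (sqb i)))) x Hi).
  rewrite <- Hstep. apply Hx.
Qed.

Lemma dims : dimH (inX A B N) = ln 2 / ln A /\ dimP (inX A B N) = ln 2 / ln B /\
   dimH (inX A B N) < dimP (inX A B N).
Proof.
  pose proof lnA_pos. pose proof lnB_pos.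
  assert (Hln2 : 0 < ln 2) by (apply ln_gt0; lra).
  assert (E1 : dimH (inX A B N) = ln 2 / ln A).
  { unfold dimH. apply Rinf_unique. apply glb_threshold.
    - left; apply Rdiv_lt_0_compat; lra.
    - intros s Hs. apply Hzero_upper; auto.
    - intros s [Hs1 Hs2]. apply Hzero_lower; auto. }
  assert (E2 : dimP (inX A B N) = ln 2 / ln B).
  { unfold dimP. apply Rinf_unique. apply glb_threshold.
    - left; apply Rdiv_lt_0_compat; lra.
    - intros s Hs. apply Pzero_upper; auto.
    - intros s [Hs1 Hs2]. apply Pzero_lower; auto. }
  split; auto. split; auto. rewrite E1, E2.
  unfold Rdiv. apply Rmult_lt_compat_l; auto. apply Rinv_lt_contravar. nra. apply ln_increasing; lra.
Qed.
Definition ek k := entropy (rh (S k)).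
Definition Ystep k (b : bool) := - ln (if b then 1 - rh (S k) else rh (S k)) - ek k.
Fixpoint Daux (w : list bool) (k : nat) : R :=
  match w with nil => 0 | b :: w' => Ystep k b + Daux w' (S k) end.
Definition Ex n k (g : list bool -> R) := SW n (fun w => muA w k * g w).

Lemma Ex_S n k g : Ex (S n) k g = rh (S k) * Ex n (S k) (fun w => g (false :: w)) + (1 - rh (S k)) * Ex n (S k) (fun w => g (true :: w)).
Proof.
  unfold Ex. rewrite SW_S, <- !SW_scal, <- SW_plus. apply SW_ext. intros w _. simpl. ring.
Qed.
Lemma Ex_const n k c : Ex n k (fun _ => c) = c.
Proof.
  unfold Ex. rewrite (SW_ext _ _ (fun w => c * muA w k)) by (intros; ring).
  rewrite SW_scal, muI_aux_sum. ring.
Qed.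
Lemma Ex_lin n k c0 c1 c2 c3 c4 g1 g2 g3 g4 :
  Ex n k (fun w => c0 + c1 * g1 w + c2 * g2 w + c3 * g3 w + c4 * g4 w) =
  c0 + c1 * Ex n k g1 + c2 * Ex n k g2 + c3 * Ex n k g3 + c4 * Ex n k g4.
Proof.
  unfold Ex. rewrite (SW_ext _ _ (fun w => c0 * muA w k + c1 * (muA w k * g1 w) + c2 * (muA w k * g2 w)
     + c3 * (muA w k * g3 w) + c4 * (muA w k * g4 w))) by (intros; ring).
  rewrite !SW_plus, !SW_scal, muI_aux_sum. ring.
Qed.

Lemma ek_bnd k : - ln (1 - rh (S k)) <= ek k <= - ln (rh (S k)).
Proof.
  unfold ek, entropy. pose proof (rho_pos (S k)). pose proof (rho_le (S k)).
  pose proof (ln_le' (rh (S k)) (1 - rh (S k)) ltac:(lra) ltac:(lra)).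
  split; nra.
Qed.
Lemma Ystep_mean k : rh (S k) * Ystep k false + (1 - rh (S k)) * Ystep k true = 0.
Proof. unfold Ystep, ek, entropy. ring. Qed.
Lemma Ystep_bnd k b : - Gm <= Ystep k b <= Gm.
Proof.
  pose proof (ek_bnd k). pose proof (rho_pos (S k)). pose proof (rho_le (S k)).
  pose proof (ln_le' (rh (S k)) (1 - rh (S k)) ltac:(lra) ltac:(lra)).
  pose proof (ln_lt0 (1 - rh (S k)) ltac:(lra) ltac:(lra)).
  destruct (mstep_bnd (fun _ => false) k) as [_ G]. unfold mfac in G.
  unfold Ystep. destruct b; lra.
Qed.

Lemma Ex_ext n k g h : (forall w, g w = h w) -> Ex n k g = Ex n k h.
Proof. intros H. unfold Ex. apply SW_ext. intros; rewrite H; auto. Qed.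
Lemma Ex_nonneg n k g : (forall w, 0 <= g w) -> 0 <= Ex n k g.
Proof. intros H. unfold Ex. apply SW_ge0. intros w _. pose proof (muI_aux_pos w k). pose proof (H w). nra. Qed.
Lemma Ex_mono n k g h : (forall w, g w <= h w) -> Ex n k g <= Ex n k h.
Proof. intros H. unfold Ex. apply SW_le. intros w _. pose proof (muI_aux_pos w k). pose proof (H w). nra. Qed.

Lemma Ysq_bnd k b : Ystep k b ^ 2 <= Gm ^ 2 /\ Ystep k b ^ 4 <= Gm ^ 4.
Proof.
  destruct (Ystep_bnd k b). pose proof Gm_pos.
  assert (Ystep k b ^ 2 <= Gm ^ 2) by nra. split; auto.
  assert (0 <= Ystep k b ^ 2) by nra.
  replace (Ystep k b ^ 4) with ((Ystep k b ^ 2) ^ 2) by ring.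
  replace (Gm ^ 4) with ((Gm ^ 2) ^ 2) by ring. nra.
Qed.

Lemma mom1 n : forall k, Ex n k (fun w => Daux w k) = 0.
Proof.
  induction n; intros k. unfold Ex. rewrite SW_0. simpl. ring.
  rewrite Ex_S. cbn [Daux].
  assert (E : forall b, Ex n (S k) (fun w => Ystep k b + Daux w (S k)) = Ystep k b).
  { intros b. rewrite (Ex_ext _ _ _ (fun w => Ystep k b + 1 * Daux w (S k) + 0 * 0 + 0 * 0 + 0 * 0)) by (intros; ring).
    rewrite Ex_lin, IHn. ring. }
  rewrite !E. apply Ystep_mean.
Qed.

Lemma mom2 n : forall k, Ex n k (fun w => Daux w k ^ 2) <= INR n * Gm ^ 2.
Proof.
  induction n; intros k. unfold Ex. rewrite SW_0. simpl. lra.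
  rewrite Ex_S. cbn [Daux].
  assert (E : forall b, Ex n (S k) (fun w => (Ystep k b + Daux w (S k)) ^ 2) =
      Ystep k b ^ 2 + Ex n (S k) (fun w => Daux w (S k) ^ 2)).
  { intros b. rewrite (Ex_ext _ _ _ (fun w => Ystep k b ^ 2 + (2 * Ystep k b) * Daux w (S k) + 1 * Daux w (S k) ^ 2 + 0 * 0 + 0 * 0)) by (intros; ring).
    rewrite Ex_lin, mom1. ring. }
  rewrite !E. specialize (IHn (S k)). rewrite S_INR.
  destruct (Ysq_bnd k false). destruct (Ysq_bnd k true). pose proof (rho_pos (S k)). pose proof (rho_le (S k)).
  nra.
Qed.

Lemma mom4 n : forall k, Ex n k (fun w => Daux w k ^ 4) <= 3 * INR n ^ 2 * Gm ^ 4.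
Proof.
  induction n; intros k. unfold Ex. rewrite SW_0. simpl. lra.
  rewrite Ex_S. cbn [Daux].
  set (E2 := Ex n (S k) (fun w => Daux w (S k) ^ 2)).
  set (E3 := Ex n (S k) (fun w => Daux w (S k) ^ 3)).
  set (E4 := Ex n (S k) (fun w => Daux w (S k) ^ 4)).
  assert (E : forall b, Ex n (S k) (fun w => (Ystep k b + Daux w (S k)) ^ 4) =
      Ystep k b ^ 4 + 6 * Ystep k b ^ 2 * E2 + 4 * Ystep k b * E3 + E4).
  { intros b. rewrite (Ex_ext _ _ _ (fun w => Ystep k b ^ 4 + (4 * Ystep k b ^ 3) * Daux w (S k)
        + (6 * Ystep k b ^ 2) * Daux w (S k) ^ 2 + (4 * Ystep k b) * Daux w (S k) ^ 3 + 1 * Daux w (S k) ^ 4)) by (intros; ring).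
    rewrite Ex_lin, mom1. unfold E2, E3, E4. ring. }
  rewrite !E.
  set (a := rh (S k)). set (Y0 := Ystep k false). set (Y1 := Ystep k true).
  assert (Hm : a * Y0 + (1 - a) * Y1 = 0) by apply Ystep_mean.
  replace (a * (Y0 ^ 4 + 6 * Y0 ^ 2 * E2 + 4 * Y0 * E3 + E4) + (1 - a) * (Y1 ^ 4 + 6 * Y1 ^ 2 * E2 + 4 * Y1 * E3 + E4))
    with ((a * Y0 ^ 4 + (1 - a) * Y1 ^ 4) + 6 * E2 * (a * Y0 ^ 2 + (1 - a) * Y1 ^ 2) + 4 * E3 * (a * Y0 + (1 - a) * Y1) + E4) by ring.
  rewrite Hm.
  pose proof (mom2 n (S k)) as H2. fold E2 in H2. specialize (IHn (S k)). fold E4 in IHn.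
  assert (HE2 : 0 <= E2) by (apply Ex_nonneg; intros; apply pow2_ge_0).
  destruct (Ysq_bnd k false) as [A1 A2]. destruct (Ysq_bnd k true) as [B1 B2]. fold Y0 in A1, A2. fold Y1 in B1, B2.
  pose proof (rho_pos (S k)). pose proof (rho_le (S k)). fold a in H, H0.
  assert (a * Y0 ^ 4 + (1 - a) * Y1 ^ 4 <= Gm ^ 4) by nra.
  assert (a * Y0 ^ 2 + (1 - a) * Y1 ^ 2 <= Gm ^ 2) by nra.
  assert (0 <= a * Y0 ^ 2 + (1 - a) * Y1 ^ 2) by (pose proof (pow2_ge_0 Y0); pose proof (pow2_ge_0 Y1); nra).
  assert (6 * E2 * (a * Y0 ^ 2 + (1 - a) * Y1 ^ 2) <= 6 * (INR n * Gm ^ 2) * Gm ^ 2) by nra.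
  rewrite S_INR. pose proof (pos_INR n). pose proof Gm_pos.
  assert (0 <= Gm ^ 4) by (apply pow_le; lra).
  replace (Gm ^ 4) with (Gm ^ 2 * Gm ^ 2) in * by ring. nra.
Qed.

Lemma Daux_app w v k : Daux (w ++ v) k = Daux w k + Daux v (k + length w).
Proof.
  revert k; induction w; intros k; simpl.
  - rewrite Nat.add_0_r; ring.
  - rewrite IHw. replace (S k + length w)%nat with (k + S (length w))%nat by lia. ring.
Qed.

Lemma Daux_pre d n : Daux (pre d n) 0 = Mx d n - fsum ek n.
Proof.
  induction n. simpl. rewrite Mx_0; ring.
  simpl pre. rewrite Daux_app, IHn, pre_length, Mx_S. simpl Daux. unfold Ystep, mfac. simpl. ring.
Qed.
Definition hhA := entropy p / ln A.
Definition hhB := entropy q / ln B.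
Definition Tn n := INR n ^ 3 * sqrt (INR n).

Lemma entropy_bnds : entropy p <= - ln p /\ - ln (1 - q) <= entropy q.
Proof.
  pose proof (ln_le' p (1-p) ltac:(lra) ltac:(lra)). pose proof (ln_le' q (1-q) ltac:(lra) ltac:(lra)).
  unfold entropy. split; nra.
Qed.
Lemma hA_le_hB : hhA <= hhB /\ 0 <= hhA.
Proof.
  pose proof s_order. destruct entropy_bnds. pose proof lnA_pos. pose proof lnB_pos.
  assert (hhA <= s2) by (unfold hhA, s2, Rdiv; apply Rmult_le_compat_r; [left; apply Rinv_0_lt_compat|]; lra).
  assert (s3 <= hhB) by (unfold hhB, s3, Rdiv; apply Rmult_le_compat_r; [left; apply Rinv_0_lt_compat|]; lra).
  split; [lra|]. pose proof (ek_bnd 0). unfold ek in H6. destruct (rho_cases 1) as [E|E]; rewrite E in H6.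
  - unfold hhA. apply Rmult_le_pos; [| left; apply Rinv_0_lt_compat; lra].
    pose proof (ln_lt0 (1-p) ltac:(lra) ltac:(lra)). lra.
  - unfold hhA. apply Rmult_le_pos; [| left; apply Rinv_0_lt_compat; lra].
    pose proof (ln_lt0 (1-p) ltac:(lra) ltac:(lra)). pose proof (ln_lt0 p ltac:(lra) ltac:(lra)).
    unfold entropy. pose proof (ln_le' p (1-p) ltac:(lra) ltac:(lra)). nra.
Qed.

Lemma ek_lower k : hhA * ln (r (S k)) <= ek k.
Proof.
  destruct hA_le_hB. pose proof lnB_pos. unfold ek.
  destruct (rr_rho (S k)) as [[E1 E2]|[E1 E2]]; rewrite E1, E2.
  - unfold hhA. rewrite s_mul_A. lra.
  - assert (hhA * ln B <= hhB * ln B) by (apply Rmult_le_compat_r; lra). unfold hhB in H2. rewrite s_mul_B in H2. lra.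
Qed.
Lemma ek_upper k : ek k <= hhB * ln (r (S k)).
Proof.
  destruct hA_le_hB. pose proof lnA_pos. unfold ek.
  destruct (rr_rho (S k)) as [[E1 E2]|[E1 E2]]; rewrite E1, E2.
  - assert (hhA * ln A <= hhB * ln A) by (apply Rmult_le_compat_r; lra). unfold hhA in H2. rewrite s_mul_A in H2. lra.
  - unfold hhB. rewrite s_mul_B. lra.
Qed.
Lemma ek_range k : 0 <= ek k <= Gm.
Proof.
  pose proof (ek_bnd k). destruct (mstep_bnd (fun _ => false) k) as [_ G].
  pose proof (rho_pos (S k)). pose proof (rho_le (S k)).
  pose proof (ln_lt0 (1 - rh (S k)) ltac:(lra) ltac:(lra)). lra.
Qed.
Lemma ek_A k i : (N (2*i) < S k <= N (2*i+1))%nat -> ek k <= hhA * ln A.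
Proof. intros H. destruct (typeA_rr (S k) i H) as [_ E]. unfold ek. rewrite E. unfold hhA. rewrite s_mul_A. lra. Qed.
Lemma ek_B k i : (N (2*i+1) < S k <= N (2*i+2))%nat -> hhB * ln B <= ek k.
Proof. intros H. destruct (typeB_rr (S k) i H) as [_ E]. unfold ek. rewrite E. unfold hhB. rewrite s_mul_B. lra. Qed.

Lemma Ent_S n : fsum ek (S n) = fsum ek n + ek n.
Proof. reflexivity. Qed.

Lemma fourth_root_bnd D y : 0 <= y -> D ^ 4 <= y ^ 4 -> Rabs D <= y.
Proof.
  intros Hy H. destruct (Rle_dec (Rabs D) y) as [|Hn]; auto. exfalso. apply Rnot_le_lt in Hn.
  set (a := Rabs D) in *. assert (Ha2 : a * a = D * D) by (unfold a; rewrite <- Rabs_mult; apply Rabs_right; nra).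
  assert (0 <= a) by apply Rabs_pos. assert (y * y < a * a) by nra.
  assert (y * y * (y * y) < a * a * (a * a)) by (pose proof (Rmult_le_pos y y Hy Hy); nra).
  replace (D ^ 4) with ((D * D) * (D * D)) in H by ring. replace (y ^ 4) with (y * y * (y * y)) in H by ring.
  rewrite <- Ha2 in H. lra.
Qed.

Section Det.
Variable x : R.
Variable d : nat -> bool.
Hypothesis Hd : forall n, inI A B N (pre d n) x.
Hypothesis HD : exists n0, forall n, (n0 <= n)%nat -> Daux (pre d n) 0 ^ 4 <= Tn n.

Lemma D_small eta : 0 < eta -> exists n1, forall n, (n1 <= n)%nat -> Rabs (Mx d n - fsum ek n) <= eta * Lx n.
Proof.
  intros Heta. destruct HD as [n0 Hn0]. pose proof lnB_pos.
  set (et := eta * ln B). assert (Het : 0 < et) by (unfold et; nra).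
  destruct (nat_big ((/ et ^ 4) ^ 2)) as [n2 Hn2].
  exists (n0 + n2 + 1)%nat. intros n Hn.
  rewrite <- Daux_pre.
  assert (HnR : INR n2 <= INR n) by (apply le_INR; lia).
  assert (Hn1 : 1 <= INR n) by (replace 1 with (INR 1) by reflexivity; apply le_INR; lia).
  assert (Hsq : / et ^ 4 <= sqrt (INR n)).
  { rewrite <- (sqrt_pow2 (/ et ^ 4)). apply sqrt_le_1_alt. lra.
    left; apply Rinv_0_lt_compat, pow_lt; auto. }
  assert (Hsqn : sqrt (INR n) * sqrt (INR n) = INR n) by (apply sqrt_sqrt; lra).
  assert (Hs0 : 0 < sqrt (INR n)) by (apply sqrt_lt_R0; lra).
  assert (Tn n <= (et * INR n) ^ 4).
  { unfold Tn. assert (1 <= et ^ 4 * sqrt (INR n)).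
    { assert (0 < et ^ 4) by (apply pow_lt; auto).
      apply Rmult_le_compat_l with (r := et ^ 4) in Hsq; [|lra]. rewrite Rinv_r in Hsq; lra. }
    assert (Q : INR n ^ 3 * sqrt (INR n) * (et ^ 4 * sqrt (INR n)) = INR n ^ 3 * et ^ 4 * (sqrt (INR n) * sqrt (INR n))) by ring.
    rewrite Hsqn in Q.
    replace ((et * INR n) ^ 4) with (INR n ^ 3 * sqrt (INR n) * (et ^ 4 * sqrt (INR n))) by (rewrite Q; ring).
    assert (0 <= INR n ^ 3 * sqrt (INR n)) by (apply Rmult_le_pos; [apply pow_le|]; lra).
    nra. }
  pose proof (Hn0 n ltac:(lia)).
  assert (Q3 : Rabs (Daux (pre d n) 0) <= et * INR n) by (apply fourth_root_bnd; [nra| lra]).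
  pose proof (Lx_ge n). unfold et in Q3.
  assert (eta * (INR n * ln B) <= eta * Lx n) by (apply Rmult_le_compat_l; lra). lra.
Qed.

Let Ent := fsum ek.
Lemma Ent_0 : Ent 0%nat = 0.
Proof. reflexivity. Qed.
Lemma Ent_step : forall n, Ent (S n) = Ent n + ek n.
Proof. intros; reflexivity. Qed.

Lemma det_lower : lower_ldim A B p q N x hhA.
Proof.
  intros eps Heps. destruct hA_le_hB as [HAB HA0]. split.
  - destruct (transfer_A x d Hd (hhA - eps/2)) with (eps := eps/2) as [delta [Hdel Hf]]; [| lra |].
    + destruct (D_small (eps/2) ltac:(lra)) as [n1 Hn1]. exists n1. intros n Hn.
      specialize (Hn1 n Hn). pose proof (seq_lower Ent ek Ent_0 Ent_step hhA ek_lower n).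
      unfold Ent in *. pose proof (Rle_abs (- (Mx d n - fsum ek n))). rewrite Rabs_Ropp in H0. lra.
    + exists delta. split; auto. intros rad Hr. specialize (Hf rad Hr). lra.
  - intros delta Hdel.
    destruct (transfer_B x d Hd (hhA + eps/2)) with (delta := delta) as [rad [Hr Hf]]; auto.
    + intros n1. destruct (D_small (eps/4) ltac:(lra)) as [n2 Hn2].
      destruct (seq_freq_A Ent ek Ent_0 Ent_step hhA Gm HA0 ek_range ek_A (eps/4) ltac:(lra) (n1 + n2)) as [n [Hn Hc]].
      exists n. split; [lia|]. specialize (Hn2 n ltac:(lia)). unfold Ent in *.
      pose proof (Rle_abs (Mx d n - fsum ek n)). lra.
    + exists rad. split; auto. lra.
Qed.

Lemma det_upper : upper_ldim A B p q N x hhB.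
Proof.
  intros eps Heps. destruct hA_le_hB as [HAB HA0]. split.
  - destruct (transfer_C x d Hd (hhB + eps/2)) with (eps := eps/2) as [delta [Hdel Hf]]; [| lra |].
    + destruct (D_small (eps/2) ltac:(lra)) as [n1 Hn1]. exists n1. intros n Hn.
      specialize (Hn1 n Hn). pose proof (seq_upper Ent ek Ent_0 Ent_step hhB ek_upper n).
      unfold Ent in *. pose proof (Rle_abs (Mx d n - fsum ek n)). lra.
    + exists delta. split; auto. intros rad Hr. specialize (Hf rad Hr). lra.
  - intros delta Hdel.
    destruct (transfer_D x d Hd (hhB - eps/2)) with (eps := eps/2) (delta := delta) as [rad [Hr Hf]]; try lra.
    + intros n1. destruct (D_small (eps/4) ltac:(lra)) as [n2 Hn2].
      destruct (seq_freq_B Ent ek Ent_0 Ent_step hhB ltac:(lra) (fun k => proj1 (ek_range k)) ek_B (eps/4) ltac:(lra) (n1 + n2)) as [n [Hn Hc]].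
      exists n. split; [lia|]. specialize (Hn2 n ltac:(lia)). unfold Ent in *.
      pose proof (Rle_abs (- (Mx d n - fsum ek n))). rewrite Rabs_Ropp in H. lra.
    + exists rad. split; auto. lra.
Qed.
End Det.
Lemma tele n : (2 <= n)%nat -> / (INR n * sqrt (INR n)) <= 2 * (/ sqrt (INR (n - 1)) - / sqrt (INR n)).
Proof.
  intros Hn. rewrite minus_INR by lia. simpl (INR 1).
  assert (Hn2 : 2 <= INR n) by (replace 2 with (INR 2) by (simpl; lra); apply le_INR; auto).
  set (a := sqrt (INR n - 1)). set (b := sqrt (INR n)).
  assert (Ha : 0 < a) by (apply sqrt_lt_R0; lra). assert (Hb : 0 < b) by (apply sqrt_lt_R0; lra).
  assert (Ha2 : a * a = INR n - 1) by (apply sqrt_sqrt; lra).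
  assert (Hb2 : b * b = INR n) by (apply sqrt_sqrt; lra).
  assert (Hab : a <= b) by (apply sqrt_le_1_alt; lra).
  assert (E1 : (b - a) * (a + b) = 1) by nra.
  assert (E2 : 2 * (/ a - / b) = 2 / (a * b * (a + b))).
  { assert (b - a = / (a + b)). { apply (Rmult_eq_reg_r (a + b)); [|lra]. rewrite E1, Rinv_l; lra. }
    replace (2 * (/ a - / b)) with (2 * (b - a) / (a * b)) by (field; lra). rewrite H. field. lra. }
  rewrite E2. rewrite <- Hb2.
  assert (Hk : a * b * (a + b) <= 2 * (b * b * b)) by nra.
  assert (Hp : 0 < a * b * (a + b)) by (apply Rmult_lt_0_compat; nra).
  assert (Q : / (2 * (b * b * b)) <= / (a * b * (a + b))) by (apply Rinv_le_contravar; auto).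
  replace (/ (b * b * b)) with (2 * / (2 * (b * b * b))) by (field; nra).
  unfold Rdiv. lra.
Qed.

Definition isbad n0 n w : bool := if le_dec n0 n then (if Rlt_dec (Tn n) (Daux w 0 ^ 4) then true else false) else false.
Definition Gb n0 n w := if isbad n0 n w then muI p q N w else 0.

Lemma Gb_nonneg n0 n w : 0 <= Gb n0 n w.
Proof. unfold Gb. destruct (isbad n0 n w); [left; apply muI_pos| lra]. Qed.

Lemma level_bound n0 n : (1 <= n)%nat -> SW n (Gb n0 n) <= 3 * Gm ^ 4 / (INR n * sqrt (INR n)).
Proof.
  intros Hn. assert (Hn1 : 1 <= INR n) by (replace 1 with (INR 1) by reflexivity; apply le_INR; auto).
  assert (HT : 0 < Tn n) by (unfold Tn; apply Rmult_lt_0_compat; [apply pow_lt; lra| apply sqrt_lt_R0; lra]).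
  apply Rle_trans with (/ Tn n * Ex n 0 (fun w => Daux w 0 ^ 4)).
  - unfold Ex. rewrite <- SW_scal. apply SW_le. intros w _. unfold Gb, isbad.
    pose proof (muI_pos w). unfold muI in *.
    destruct (le_dec n0 n); [destruct (Rlt_dec _ _)|].
    + assert (1 <= / Tn n * Daux w 0 ^ 4).
      { apply Rmult_le_reg_l with (Tn n); auto. rewrite <- Rmult_assoc, Rinv_r by lra. lra. }
      nra.
    + assert (0 <= / Tn n * (muI_aux p q N w 0 * Daux w 0 ^ 4)); [|lra].
      apply Rmult_le_pos; [left; apply Rinv_0_lt_compat; auto|]. apply Rmult_le_pos; [lra|].
      replace (Daux w 0 ^ 4) with ((Daux w 0 ^ 2) ^ 2) by ring. apply pow2_ge_0.
    + assert (0 <= / Tn n * (muI_aux p q N w 0 * Daux w 0 ^ 4)); [|lra].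
      apply Rmult_le_pos; [left; apply Rinv_0_lt_compat; auto|]. apply Rmult_le_pos; [lra|].
      replace (Daux w 0 ^ 4) with ((Daux w 0 ^ 2) ^ 2) by ring. apply pow2_ge_0.
  - pose proof (mom4 n 0).
    assert (/ Tn n * Ex n 0 (fun w => Daux w 0 ^ 4) <= / Tn n * (3 * INR n ^ 2 * Gm ^ 4)).
    { apply Rmult_le_compat_l; auto. left; apply Rinv_0_lt_compat; auto. }
    eapply Rle_trans; [exact H0|]. right. unfold Tn. field.
    split; [apply Rgt_not_eq, sqrt_lt_R0; lra| lra].
Qed.

Lemma level_zero n0 n : (n < n0)%nat -> SW n (Gb n0 n) = 0.
Proof.
  intros H. rewrite (SW_ext _ _ (fun _ => 0)). rewrite SW_const; ring.
  intros w _. unfold Gb, isbad. destruct (le_dec n0 n); [lia| auto].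
Qed.

Lemma sum_bound n0 M : (2 <= n0)%nat ->
  fsum (fun n => SW n (Gb n0 n)) M <= 6 * Gm ^ 4 * (/ sqrt (INR (n0 - 1)) - / sqrt (INR (Nat.max M n0 - 1))).
Proof.
  intros Hn0. pose proof Gm_pos. assert (HG : 0 < Gm ^ 4) by (apply pow_lt; lra).
  induction M.
  - simpl. replace (Nat.max 0 n0) with n0 by lia. lra.
  - rewrite fsum_S. destruct (le_lt_dec n0 M) as [HM|HM].
    + rewrite Nat.max_l in IHM by lia. rewrite Nat.max_l by lia.
      pose proof (level_bound n0 M ltac:(lia)). pose proof (tele M ltac:(lia)).
      replace (S M - 1)%nat with M by lia.
      assert (3 * Gm ^ 4 / (INR M * sqrt (INR M)) <= 6 * Gm ^ 4 * (/ sqrt (INR (M - 1)) - / sqrt (INR M))).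
      { unfold Rdiv. replace (6 * Gm ^ 4 * (/ sqrt (INR (M - 1)) - / sqrt (INR M))) with
          (3 * Gm ^ 4 * (2 * (/ sqrt (INR (M - 1)) - / sqrt (INR M)))) by ring.
        apply Rmult_le_compat_l; lra. }
      lra.
    + rewrite level_zero by auto. rewrite Nat.max_r in IHM by lia. rewrite Nat.max_r by lia. lra.
Qed.

Lemma muI_repeat L : muI p q N (repeat false L) <= (/ 2) ^ L.
Proof.
  unfold muI. generalize 0%nat. induction L; intros k; simpl; [lra|].
  pose proof (rho_pos (S k)). pose proof (rho_le (S k)). pose proof (IHL (S k)).
  pose proof (muI_aux_pos (repeat false L) (S k)). nra.
Qed.

Lemma fsum_split f a b : fsum f (a + b) = fsum f a + fsum (fun t => f (a + t)%nat) b.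
Proof. induction b. rewrite Nat.add_0_r; simpl; ring. rewrite Nat.add_succ_r, !fsum_S, IHb. ring. Qed.
Lemma fsum_shift f k : fsum f (S k) = f 0%nat + fsum (fun t => f (S t)) k.
Proof. induction k. simpl; ring. rewrite fsum_S, IHk, fsum_S. ring. Qed.
Lemma fsum_nth (G : list bool -> R) l : fsum (fun t => G (nth t l nil)) (length l) = fold_right Rplus 0 (map G l).
Proof.
  induction l; [reflexivity|]. cbn [length map fold_right]. rewrite fsum_shift, <- IHl. reflexivity.
Qed.

Definition wd i := nth (i - 2 ^ (Nat.log2 i)) (words (Nat.log2 i)) nil.
Definition hfun n0 i := if (1 <=? i)%nat then Gb n0 (Nat.log2 i) (wd i) else 0.

Lemma log2_block m t : (t < 2 ^ m)%nat -> Nat.log2 (2 ^ m + t) = m.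
Proof. intros H. apply (Nat.log2_unique' _ _ t); lia. Qed.

Lemma block_sum n0 m : fsum (hfun n0) (2 ^ m) = fsum (fun n => SW n (Gb n0 n)) m.
Proof.
  induction m.
  - simpl. unfold hfun. simpl. ring.
  - rewrite fsum_S. replace (2 ^ S m)%nat with (2 ^ m + 2 ^ m)%nat by (simpl; lia).
    rewrite fsum_split, IHm. f_equal.
    rewrite (fsum_ext _ (fun t => Gb n0 m (nth t (words m) nil))).
    + rewrite <- (words_len m), fsum_nth. reflexivity.
    + intros t Ht. unfold hfun, wd. assert (Hle : (1 <=? 2 ^ m + t)%nat = true).
      { apply Nat.leb_le. pose proof (Nat.pow_nonzero 2 m ltac:(lia)). lia. }
      rewrite Hle, log2_block by auto. f_equal. f_equal. lia.
Qed.

Lemma fsum_geom2 K0 L : fsum (fun i => (/ 2) ^ (i + K0)) L <= 2 * (/ 2) ^ K0.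
Proof.
  assert (forall L, fsum (fun i => (/ 2) ^ (i + K0)) L = 2 * (/ 2) ^ K0 * (1 - (/ 2) ^ L)).
  { induction L0. simpl; ring. rewrite fsum_S, IHL0, pow_add. simpl. field. }
  rewrite H. pose proof (pow_lt (/2) L ltac:(lra)). pose proof (pow_lt (/2) K0 ltac:(lra)). nra.
Qed.

Definition cov n0 K0 i := if ((1 <=? i)%nat && isbad n0 (Nat.log2 i) (wd i))%bool then wd i else repeat false (i + K0).

Lemma cov_mass n0 K0 L : (2 <= n0)%nat ->
  fsum (fun i => muI p q N (cov n0 K0 i)) L <= 6 * Gm ^ 4 * / sqrt (INR (n0 - 1)) + 2 * (/ 2) ^ K0.
Proof.
  intros Hn0. eapply Rle_trans.
  - apply (fsum_le _ (fun i => hfun n0 i + (/ 2) ^ (i + K0))). intros i _.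
    unfold cov, hfun. destruct (1 <=? i)%nat; simpl.
    + unfold Gb. destruct (isbad n0 (Nat.log2 i) (wd i)).
      * pose proof (pow_lt (/2) (i + K0) ltac:(lra)). lra.
      * pose proof (muI_repeat (i + K0)). lra.
    + pose proof (muI_repeat (i + K0)). lra.
  - rewrite fsum_plus. pose proof (fsum_geom2 K0 L).
    assert (fsum (hfun n0) L <= fsum (hfun n0) (2 ^ L)).
    { apply fsum_mono. intros i. unfold hfun. destruct (1 <=? i)%nat; [apply Gb_nonneg| lra].
      apply Nat.lt_le_incl, Nat.pow_gt_lin_r; lia. }
    rewrite block_sum in H0. pose proof (sum_bound n0 L Hn0).
    assert (0 < / sqrt (INR (Nat.max L n0 - 1))).
    { apply Rinv_0_lt_compat, sqrt_lt_R0. apply lt_0_INR. lia. }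
    pose proof Gm_pos. assert (0 < Gm ^ 4) by (apply pow_lt; lra).
    assert (0 < 6 * Gm ^ 4 * / sqrt (INR (Nat.max L n0 - 1))) by (apply Rmult_lt_0_compat; lra).
    lra.
Qed.

Lemma part3 : mu_null A B p q N (fun x => inX A B N x /\
     ~ (lower_ldim A B p q N x (entropy p / ln A) /\ upper_ldim A B p q N x (entropy q / ln B))).
Proof.
  intros eps Heps. pose proof Gm_pos. assert (HG : 0 < Gm ^ 4) by (apply pow_lt; lra).
  set (y := 12 * Gm ^ 4 / eps).
  assert (Hy : 0 < y) by (unfold y; apply Rdiv_lt_0_compat; lra).
  destruct (nat_big (y ^ 2)) as [m0 Hm0].
  set (n0 := (m0 + 2)%nat).
  assert (Hsq : y <= sqrt (INR (n0 - 1))).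
  { assert (INR m0 <= INR (n0 - 1)) by (apply le_INR; unfold n0; lia).
    rewrite <- (sqrt_pow2 y) by lra. apply sqrt_le_1_alt. lra. }
  destruct (pow_small (/2) (eps / 4)) as [K0 HK0]; [split; [left; apply Rinv_0_lt_compat; lra| lra]| lra|].
  exists (cov n0 K0). split.
  - intros x [HX Hn]. apply NNPP. intros Hnc. apply Hn.
    destruct (address x HX) as [d Hd].
    assert (HD : exists n0', forall n, (n0' <= n)%nat -> Daux (pre d n) 0 ^ 4 <= Tn n).
    { exists n0. intros n Hn0. destruct (Rle_dec (Daux (pre d n) 0 ^ 4) (Tn n)) as [|Hlt]; auto. exfalso.
      apply Hnc. destruct (In_nth (words n) (pre d n) nil (words_In n _ (pre_length d n))) as [t [Ht Hnth]].
      rewrite words_len in Ht. exists (2 ^ n + t)%nat.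
      unfold cov. assert (Hle : (1 <=? 2 ^ n + t)%nat = true).
      { apply Nat.leb_le. pose proof (Nat.pow_nonzero 2 n ltac:(lia)). lia. }
      assert (Hw : wd (2 ^ n + t) = pre d n).
      { unfold wd. rewrite log2_block by auto. replace (2 ^ n + t - 2 ^ n)%nat with t by lia. auto. }
      rewrite Hle, Hw. unfold isbad. rewrite log2_block by auto.
      destruct (le_dec n0 n); [|lia]. destruct (Rlt_dec _ _) as [|Hn']; [simpl; auto| exfalso; lra]. }
    split; [apply (det_lower x d Hd HD)| apply (det_upper x d Hd HD)].
  - intros L. eapply Rle_trans; [apply cov_mass; unfold n0; lia|].
    specialize (HK0 K0 (le_n K0)).
    assert (6 * Gm ^ 4 * / sqrt (INR (n0 - 1)) <= eps / 2).
    { assert (0 < sqrt (INR (n0 - 1))) by lra.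
      apply Rmult_le_reg_r with (sqrt (INR (n0 - 1))); auto.
      rewrite Rmult_assoc, Rinv_l by lra. unfold y in Hsq.
      assert (12 * Gm ^ 4 / eps * eps <= sqrt (INR (n0 - 1)) * eps) by (apply Rmult_le_compat_r; lra).
      replace (12 * Gm ^ 4 / eps * eps) with (12 * Gm ^ 4) in H1 by (field; lra). lra. }
    lra.
Qed.
Lemma main_all :
  (forall x, inX A B N x ->
     exists dl du, lower_ldim A B p q N x dl /\ upper_ldim A B p q N x du /\
       - ln (1 - p) / ln A <= dl <= - ln p / ln A /\
       - ln (1 - q) / ln B <= du <= - ln q / ln B) /\
  (forall x, inX A B N x -> forall dl du,
     lower_ldim A B p q N x dl -> upper_ldim A B p q N x du -> dl < du) /\
  mu_null A B p q N (fun x => inX A B N x /\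
     ~ (lower_ldim A B p q N x (entropy p / ln A) /\
        upper_ldim A B p q N x (entropy q / ln B))) /\
  (dimH (inX A B N) = ln 2 / ln A /\ dimP (inX A B N) = ln 2 / ln B /\
   dimH (inX A B N) < dimP (inX A B N)).
Proof.
  split; [exact part1|]. split; [exact part2|]. split; [exact part3| exact dims].
Qed.

End Main.

Theorem theorem2p1 (A B p q : R) (N : nat -> nat)
  (hB : 2 < B) (hAB : B < A)
  (hp : 0 < p <= 1 / 2) (hq : 0 < q <= 1 / 2)
  (hN0 : N 0%nat = 0%nat) (hNinc : forall i, (N i < N (S i))%nat)
  (hNratio : forall M : R, exists i0, forall i, (i0 <= i)%nat ->
               M < INR (N (S i)) / INR (N i))
  (hexp : - ln p / ln A < - ln (1 - q) / ln B) :
  (forall x, inX A B N x ->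
     exists dl du, lower_ldim A B p q N x dl /\ upper_ldim A B p q N x du /\
       - ln (1 - p) / ln A <= dl <= - ln p / ln A /\
       - ln (1 - q) / ln B <= du <= - ln q / ln B) /\
  (forall x, inX A B N x -> forall dl du,
     lower_ldim A B p q N x dl -> upper_ldim A B p q N x du -> dl < du) /\
  mu_null A B p q N (fun x => inX A B N x /\
     ~ (lower_ldim A B p q N x (entropy p / ln A) /\
        upper_ldim A B p q N x (entropy q / ln B))) /\
  (dimH (inX A B N) = ln 2 / ln A /\ dimP (inX A B N) = ln 2 / ln B /\
   dimH (inX A B N) < dimP (inX A B N)).
Proof.
  apply (main_all A B p q N); assumption.
Qed.
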